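(* Consider the sub-$\ell^\infty$ structure on $\mathbb{R}^3$ defined by $X_1=\partial_x-\tfrac{y}{2}\partial_z$, $X_2=\partial_y+\tfrac{x}{2}\partial_z$. If an extremal pair $(\lambda,\gamma)$ on $[0,T]$ has a regular arc, then $\gamma$ is a regular bang-bang trajectory. Moreover, there is $s>0$ such that all its arcs have length (duration) $s$, except possibly the first and the last arc, whose lengths are at most $s$ (in the case $\langle\lambda,\partial_z\rangle\equiv0$ the trajectory consists of a single regular arc). At consecutive junctions between regular arcs, the components $u_1$ and $u_2$ of the control change sign alternately (at each junction exactly one component changes sign, and the component that changes sign alternates).
   Context: Sub-$\ell^\infty$ structure defined by smooth vector fields $X_1,\dots,X_k$ on a manifold $M$: an admissible trajectory is an absolutely continuous curve $\gamma:[0,T]\to M$ together with a measurable control $u=(u_1,\dots,u_k):[0,T]\to\mathbb{R}^k$ with $|u_i(t)|\le1$ for all $i$ and a.e. $t$, such that $\dot\gamma(t)=\sum_i u_i(t)X_i(\gamma(t))$ for a.e. $t$. An extremal pair is a pair $(\lambda,\gamma)$ where $\gamma$ is admissible with control $u$ and $\lambda:[0,T]\to T^*M$ is absolutely continuous with $\lambda(t)\in T^*_{\gamma(t)}M\setminus\{0\}$, such that, with $\mathcal H(\lambda,p,u)=\sum_i u_i\langle\lambda,X_i(p)\rangle$, in canonical coordinates $\dot\lambda=-\partial_p\mathcal H(\lambda,\gamma,u)$, $\dot\gamma=\partial_\lambda\mathcal H(\lambda,\gamma,u)$ a.e., and there is a constant $\lambda_0\ge0$ with $\sum_iu_i(t)\langle\lambda(t),X_i(\gamma(t))\rangle=\sum_i|\langle\lambda(t),X_i(\gamma(t))\rangle|=\lambda_0$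 for a.e. $t$; $\gamma$ is then an extremal trajectory and $\lambda$ an extremal lift. The switching functions are $\varphi_j(t)=\langle\lambda(t),X_j(\gamma(t))\rangle$. The restriction of an extremal pair to an open interval $I$ is a regular arc if $\varphi_j(t)\ne0$ for all $t\in I$ and all $j$; arcs are taken maximal (not contained in a strictly larger open interval with the same property). A regular bang-bang trajectory is an extremal trajectory with an extremal lift such that $[0,T]$ minus finitely many points is a finite union of maximal regular arcs (on each of which the control is then constant with values in $\{1,-1\}^k$); these are its arcs. *)

(* Defs.v *)
From Stdlib Require Import Reals Lra List.
Open Scope R_scope.

(* Points of R^3 and covectors (canonical coordinates of T^*R^3 = R^3 x R^3). *)
Definition R3 : Type := (R * R * R)%type.

Definition coord (k : nat) (p : R3) : R :=
  match p with (x, y, z) =>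
    match k with 0%nat => x | 1%nat => y | _ => z end end.

Definition setc (k : nat) (p : R3) (s : R) : R3 :=
  match p with (x, y, z) =>
    match k with 0%nat => (s, y, z) | 1%nat => (x, s, z) | _ => (x, y, s) end end.

Definition X1 (p : R3) : R3 := match p with (x, y, z) => (1, 0, - (y / 2)) end.
Definition X2 (p : R3) : R3 := match p with (x, y, z) => (0, 1, x / 2) end.

Definition pairing (l v : R3) : R :=
  match l, v with (a, b, c), (d, e, f) => a * d + b * e + c * f end.

Definition Ham (l p : R3) (u : R * R) : R :=
  fst u * pairing l (X1 p) + snd u * pairing l (X2 p).

(* Lebesgue-null subsets of R: coverable by countably many intervals of
   arbitrarily small total length. *)
Definition negligible (S : R -> Prop) : Prop :=
  forall eps, 0 < eps -> exists a b : nat -> R,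
    (forall n, a n <= b n) /\
    (forall N, sum_f_R0 (fun n => b n - a n) N <= eps) /\
    (forall x, S x -> exists n, a n < x < b n).

Definition ae_on (a b : R) (P : R -> Prop) : Prop :=
  negligible (fun t => a <= t <= b /\ ~ P t).

(* a <= c1 <= d1 <= c2 <= d2 <= ... <= b : finite families of
   non-overlapping subintervals [ci,di] of [a,b] *)
Fixpoint chain_in (a b : R) (l : list (R * R)) : Prop :=
  match l with
  | nil => a <= b
  | (c, d) :: l' => a <= c /\ c <= d /\ chain_in d b l'
  end.

Definition AC_on (a b : R) (f : R -> R) : Prop :=
  forall eps, 0 < eps -> exists delta, 0 < delta /\
    forall l, chain_in a b l ->
      fold_right (fun cd acc => (snd cd - fst cd) + acc) 0 l < delta ->
      fold_right (fun cd acc => Rabs (f (snd cd) - f (fst cd)) + acc) 0 l < eps.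

(* canonical equations at time t:
   d/dt lambda_k = - dH/dp_k ,  d/dt gamma_k = dH/dlambda_k *)
Definition hamiltonian_eqs (lam gam : R -> R3) (u : R -> R * R) (t : R) : Prop :=
  forall k, (k < 3)%nat ->
    (exists d, derivable_pt_lim
                 (fun s => Ham (lam t) (setc k (gam t) s) (u t)) (coord k (gam t)) d
               /\ derivable_pt_lim (fun s => coord k (lam s)) t (- d)) /\
    (exists d, derivable_pt_lim
                 (fun s => Ham (setc k (lam t) s) (gam t) (u t)) (coord k (lam t)) d
               /\ derivable_pt_lim (fun s => coord k (gam s)) t d).

Definition phi1 (lam gam : R -> R3) (t : R) : R := pairing (lam t) (X1 (gam t)).
Definition phi2 (lam gam : R -> R3) (t : R) : R := pairing (lam t) (X2 (gam t)).

Definition extremal_pair (T : R) (lam gam : R -> R3) (u : R -> R * R) : Prop :=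
  (forall k, (k < 3)%nat -> AC_on 0 T (fun t => coord k (gam t))) /\
  (forall k, (k < 3)%nat -> AC_on 0 T (fun t => coord k (lam t))) /\
  ae_on 0 T (fun t => Rabs (fst (u t)) <= 1 /\ Rabs (snd (u t)) <= 1) /\
  (forall t, 0 <= t <= T -> lam t <> (0, 0, 0)) /\
  ae_on 0 T (hamiltonian_eqs lam gam u) /\
  (exists lam0, 0 <= lam0 /\
     ae_on 0 T (fun t =>
        Ham (lam t) (gam t) (u t) = lam0 /\
        Rabs (phi1 lam gam t) + Rabs (phi2 lam gam t) = lam0)).

Definition regular_on (lam gam : R -> R3) (a b : R) : Prop :=
  forall t, a < t < b -> phi1 lam gam t <> 0 /\ phi2 lam gam t <> 0.

Definition maximal_regular_arc (T : R) (lam gam : R -> R3) (a b : R) : Prop :=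
  0 <= a /\ a < b /\ b <= T /\ regular_on lam gam a b /\
  forall a' b', 0 <= a' <= a -> b <= b' <= T -> regular_on lam gam a' b' ->
    a' = a /\ b' = b.

(* Main.v *)
Require Import Defs.
From Stdlib Require Import Reals Lra Lia List ClassicalEpsilon Classical ZArith Arith.
Open Scope R_scope.

Lemma neg_subset (S S' : R -> Prop) :
  (forall x, S x -> S' x) -> negligible S' -> negligible S.
Proof.
  intros H HS eps He. destruct (HS eps He) as [a [b [H1 [H2 H3]]]].
  exists a, b. split; [|split]; auto.
Qed.

Lemma sum_mono_k (h : nat -> R) : (forall n, 0 <= h n) ->
  forall M k, sum_f_R0 h M <= sum_f_R0 h (M + k).
Proof.
  intros Hh M k. induction k.
  - rewrite Nat.add_0_r; lra.
  - rewrite Nat.add_succ_r. simpl. specialize (Hh (S (M + k))). lra.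
Qed.

Definition ilv (a1 a2 : nat -> R) (n : nat) : R :=
  if Nat.even n then a1 (Nat.div2 n) else a2 (Nat.div2 n).

Lemma ilv_even a1 a2 k : ilv a1 a2 (2 * k) = a1 k.
Proof. unfold ilv. rewrite Nat.even_even, Nat.div2_double. reflexivity. Qed.
Lemma ilv_odd a1 a2 k : ilv a1 a2 (S (2 * k)) = a2 k.
Proof.
  unfold ilv. replace (S (2*k)) with (2*k+1)%nat by lia.
  rewrite Nat.even_odd. replace (2*k+1)%nat with (S (2*k)) by lia.
  rewrite Nat.div2_succ_double. reflexivity.
Qed.

Lemma sum_ilv (g1 g2 : nat -> R) N :
  sum_f_R0 (fun n => ilv g1 g2 n) (S (2 * N)) = sum_f_R0 g1 N + sum_f_R0 g2 N.
Proof.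
  induction N.
  - simpl. unfold ilv. simpl. lra.
  - replace (S (2 * S N)) with (S (S (S (2 * N)))) by lia.
    change (sum_f_R0 (fun n => ilv g1 g2 n) (S (S (S (2 * N)))))
      with (sum_f_R0 (fun n => ilv g1 g2 n) (S (2 * N))
            + ilv g1 g2 (S (S (2 * N))) + ilv g1 g2 (S (S (S (2 * N))))).
    rewrite IHN.
    replace (S (S (2 * N))) with (2 * S N)%nat by lia.
    rewrite ilv_even, ilv_odd. simpl. lra.
Qed.

Lemma neg_union (S1 S2 : R -> Prop) :
  negligible S1 -> negligible S2 -> negligible (fun x => S1 x \/ S2 x).
Proof.
  intros H1 H2 eps He.
  destruct (H1 (eps/2)) as [a1 [b1 [Ha1 [Hs1 Hc1]]]]; [lra|].
  destruct (H2 (eps/2)) as [a2 [b2 [Ha2 [Hs2 Hc2]]]]; [lra|].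
  exists (ilv a1 a2), (ilv b1 b2). split; [|split].
  - intros n. unfold ilv. destruct (Nat.even n); auto.
  - intros N.
    assert (Heq : forall n, ilv b1 b2 n - ilv a1 a2 n
               = ilv (fun k => b1 k - a1 k) (fun k => b2 k - a2 k) n).
    { intros n; unfold ilv; destruct (Nat.even n); reflexivity. }
    assert (Hp : forall n, 0 <= ilv (fun k => b1 k - a1 k) (fun k => b2 k - a2 k) n).
    { intros n; unfold ilv; destruct (Nat.even n);
      [specialize (Ha1 (Nat.div2 n))|specialize (Ha2 (Nat.div2 n))]; lra. }
    rewrite (sum_eq _ _ N (fun n _ => Heq n)).
    eapply Rle_trans. apply (sum_mono_k _ Hp N (S N)).
    replace (N + S N)%nat with (S (2 * N))%nat by lia.
    rewrite sum_ilv. specialize (Hs1 N). specialize (Hs2 N). lra.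
  - intros x [Hx|Hx].
    + destruct (Hc1 x Hx) as [n Hn]. exists (2*n)%nat. rewrite !ilv_even. auto.
    + destruct (Hc2 x Hx) as [n Hn]. exists (S (2*n))%nat. rewrite !ilv_odd. auto.
Qed.

Lemma neg_point (c : R) : negligible (fun x => x = c).
Proof.
  intros eps He.
  exists (fun n => if Nat.eqb n 0 then c - eps/4 else 0),
         (fun n => if Nat.eqb n 0 then c + eps/4 else 0).
  split; [|split].
  - intros n; destruct (Nat.eqb n 0); lra.
  - assert (forall N, sum_f_R0 (fun n => (if Nat.eqb n 0 then c + eps / 4 else 0) -
       (if Nat.eqb n 0 then c - eps / 4 else 0)) N = eps/2).
    { induction N; simpl; [lra|]. rewrite IHN. lra. }
    intros N; rewrite H; lra.
  - intros x ->. exists 0%nat. simpl. lra.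
Qed.

Lemma ae_and a b (P Q : R -> Prop) : ae_on a b P -> ae_on a b Q -> ae_on a b (fun t => P t /\ Q t).
Proof.
  intros HP HQ. unfold ae_on.
  apply neg_subset with (S' := fun t => (a <= t <= b /\ ~ P t) \/ (a <= t <= b /\ ~ Q t)).
  - intros t [Ht HN]. destruct (classic (P t)); [right|left]; split; auto.
  - apply neg_union; auto.
Qed.

Definition lenL (l : list (R*R)) : R := fold_right (fun cd acc => (snd cd - fst cd) + acc) 0 l.
Definition varL (f : R -> R) (l : list (R*R)) : R :=
  fold_right (fun cd acc => Rabs (f (snd cd) - f (fst cd)) + acc) 0 l.

Lemma chain_mono_l a a' b l : chain_in a b l -> a' <= a -> chain_in a' b l.
Proof. destruct l as [|[c d] l]; simpl; intros; try lra. intuition lra. Qed.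

Lemma chain_mono_r l : forall a b b', chain_in a b l -> b <= b' -> chain_in a b' l.
Proof. induction l as [|[c d] l IH]; simpl; intros a b b' H Hb; [lra|].
  destruct H as [? [? ?]]. split; [lra|split;[lra|]]. eapply IH; eauto. Qed.

Lemma AC_sub a b c d f : AC_on a b f -> a <= c -> d <= b -> AC_on c d f.
Proof.
  intros H Hc Hd eps He. destruct (H eps He) as [del [Hd0 Hdel]].
  exists del; split; auto. intros l Hl. apply Hdel.
  apply chain_mono_r with d; auto. apply chain_mono_l with c; auto.
Qed.

Lemma varL_plus f g l : varL (fun x => f x + g x) l <= varL f l + varL g l.
Proof.
  induction l as [|[c d] l IH]; simpl; [lra|].
  pose proof (Rabs_triang (f d - f c) (g d - g c)).
  replace (f d + g d - (f c + g c)) with ((f d - f c) + (g d - g c)) by ring. lra.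
Qed.

Lemma varL_scal k f l : varL (fun x => k * f x) l = Rabs k * varL f l.
Proof.
  induction l as [|[c d] l IH]; simpl; [ring|].
  replace (k * f d - k * f c) with (k * (f d - f c)) by ring.
  rewrite Rabs_mult, IH. ring.
Qed.


Lemma AC_plus a b f g : AC_on a b f -> AC_on a b g -> AC_on a b (fun x => f x + g x).
Proof.
  intros Hf Hg eps He.
  destruct (Hf (eps/2)) as [d1 [Hd1 H1]]; [lra|].
  destruct (Hg (eps/2)) as [d2 [Hd2 H2]]; [lra|].
  exists (Rmin d1 d2). split; [apply Rmin_glb_lt; auto|].
  intros l Hl Hlen.
  assert (A1 := H1 l Hl ltac:(pose proof (Rmin_l d1 d2); lra)).
  assert (A2 := H2 l Hl ltac:(pose proof (Rmin_r d1 d2); lra)).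
  pose proof (varL_plus f g l). unfold varL in *. lra.
Qed.

Lemma AC_scal a b k f : AC_on a b f -> AC_on a b (fun x => k * f x).
Proof.
  intros Hf eps He.
  assert (Hk : 0 < Rabs k + 1) by (pose proof (Rabs_pos k); lra).
  destruct (Hf (eps / (Rabs k + 1))) as [d1 [Hd1 H1]].
  { apply Rdiv_lt_0_compat; lra. }
  exists d1. split; auto. intros l Hl Hlen.
  assert (A1 := H1 l Hl Hlen).
  pose proof (varL_scal k f l). unfold varL in *. rewrite H.
  assert (0 <= fold_right (fun cd acc => Rabs (f (snd cd) - f (fst cd)) + acc) 0 l).
  { clear. induction l; simpl; [lra|]. pose proof (Rabs_pos (f (snd a) - f (fst a))). lra. }
  apply Rle_lt_trans with ((Rabs k + 1) * fold_right (fun cd acc => Rabs (f (snd cd) - f (fst cd)) + acc) 0 l).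
  { nra. }
  apply Rmult_lt_reg_l with (/ (Rabs k + 1)). { apply Rinv_0_lt_compat; lra. }
  rewrite <- Rmult_assoc, Rinv_l by lra. unfold Rdiv in A1. lra.
Qed.

Lemma AC_id a b : AC_on a b (fun x => x).
Proof.
  intros eps He. exists eps. split; auto. intros l Hl Hlen.
  unfold varL, lenL in *. 
  assert (forall l a, chain_in a b l ->
    fold_right (fun cd acc => Rabs (snd cd - fst cd) + acc) 0 l =
    fold_right (fun cd acc => snd cd - fst cd + acc) 0 l).
  { clear. induction l as [|[c d] l IH]; simpl; intros a0 Hl; [lra|].
    destruct Hl as [? [? ?]]. rewrite Rabs_right by lra. rewrite (IH d); auto. }
  rewrite H with (a := a); auto.
Qed.

Lemma AC_ext a b f g : (forall x, f x = g x) -> AC_on a b f -> AC_on a b g.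
Proof.
  intros He Hf eps Hep. destruct (Hf eps Hep) as [d [Hd H]]. exists d; split; auto.
  intros l Hl Hlen. specialize (H l Hl Hlen).
  replace (fold_right (fun cd acc => Rabs (g (snd cd) - g (fst cd)) + acc) 0 l)
    with (fold_right (fun cd acc => Rabs (f (snd cd) - f (fst cd)) + acc) 0 l); auto.
  clear -He. induction l; simpl; auto. rewrite IHl, !He. auto.
Qed.

Definition cont_on (L U : R) (f : R -> R) : Prop :=
  forall x, L <= x <= U -> forall e, 0 < e -> exists d, 0 < d /\
    forall y, L <= y <= U -> Rabs (y - x) < d -> Rabs (f y - f x) < e.

Lemma AC_cont L U f : AC_on L U f -> cont_on L U f.
Proof.
  intros Hf x Hx e He. destruct (Hf e He) as [d [Hd H]]. exists d; split; auto.
  intros y Hy Hyx. destruct (Rle_dec x y).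
  - specialize (H ((x, y) :: nil)). simpl in H.
    assert (Rabs (f y - f x) + 0 < e). { apply H. lra. rewrite Rabs_right in Hyx; lra. } lra.
  - specialize (H ((y, x) :: nil)). simpl in H.
    assert (Rabs (f x - f y) + 0 < e). { apply H. lra. rewrite Rabs_left in Hyx; lra. }
    rewrite Rabs_minus_sym. lra.
Qed.

Lemma cont_ext L U f g : (forall x, L <= x <= U -> f x = g x) -> cont_on L U f -> cont_on L U g.
Proof.
  intros He Hf x Hx e Hep. destruct (Hf x Hx e Hep) as [d [Hd H]]. exists d; split; auto.
  intros y Hy Hyx. rewrite <- !He; auto.
Qed.

Lemma cont_plus L U f g : cont_on L U f -> cont_on L U g -> cont_on L U (fun x => f x + g x).
Proof.
  intros Hf Hg x Hx e He.
  destruct (Hf x Hx (e/2)) as [d1 [Hd1 H1]]; [lra|].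
  destruct (Hg x Hx (e/2)) as [d2 [Hd2 H2]]; [lra|].
  exists (Rmin d1 d2); split; [apply Rmin_glb_lt; auto|]. intros y Hy Hyx.
  specialize (H1 y Hy ltac:(pose proof (Rmin_l d1 d2); lra)).
  specialize (H2 y Hy ltac:(pose proof (Rmin_r d1 d2); lra)).
  replace (f y + g y - (f x + g x)) with ((f y - f x) + (g y - g x)) by ring.
  pose proof (Rabs_triang (f y - f x) (g y - g x)). lra.
Qed.

Lemma cont_abs L U f : cont_on L U f -> cont_on L U (fun x => Rabs (f x)).
Proof.
  intros Hf x Hx e He. destruct (Hf x Hx e He) as [d [Hd H]]. exists d; split; auto.
  intros y Hy Hyx. specialize (H y Hy Hyx).
  pose proof (Rabs_triang_inv2 (f y) (f x)). lra.
Qed.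

Lemma real_ind (P : R -> Prop) a b : a <= b ->
  (forall x, a <= x <= b -> (forall y, a <= y < x -> P y) -> P x) ->
  (forall x, a <= x < b -> (forall y, a <= y <= x -> P y) ->
     exists h, 0 < h /\ forall y, x < y < x + h -> y <= b -> P y) ->
  forall x, a <= x <= b -> P x.
Proof.
  intros Hab H1 H2.
  set (S := fun x => a <= x <= b /\ forall y, a <= y <= x -> P y).
  assert (Pa : P a) by (apply H1; [lra| intros; lra]).
  assert (Hb : bound S) by (exists b; intros x [Hx _]; lra).
  assert (Hne : exists x, S x) by (exists a; split; [lra| intros y Hy; replace y with a by lra; auto]).
  destruct (completeness S Hb Hne) as [m [Hub Hlub]].
  assert (Ham : a <= m) by (apply Hub; destruct Hne; unfold S; split; [lra| intros y Hy; replace y with a by lra; auto]).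
  assert (Hmb : m <= b) by (apply Hlub; intros x [Hx _]; lra).
  assert (Q : forall y, a <= y < m -> P y).
  { intros y Hy. apply NNPP. intro HN.
    assert (m <= y). { apply Hlub. intros x [Hx Hx2]. destruct (Rle_dec x y); auto.
      exfalso; apply HN; apply Hx2; lra. } lra. }
  assert (Pm : P m) by (apply H1; auto; lra).
  assert (Qm : forall y, a <= y <= m -> P y).
  { intros y Hy. destruct (Req_dec y m); [subst; auto| apply Q; lra]. }
  destruct (Req_dec m b) as [->|Hne'].
  - intros x Hx. apply Qm; lra.
  - exfalso. destruct (H2 m ltac:(lra) Qm) as [h [Hh Hy]].
    set (z := Rmin (m + h/2) b).
    assert (Hz1 : m < z) by (unfold z; apply Rmin_glb_lt; lra).
    assert (Hz2 : z <= b) by apply Rmin_r.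
    assert (Hz3 : z <= m + h/2) by apply Rmin_l.
    assert (S z). { split; [lra|]. intros y Hy'. destruct (Rle_dec y m).
      apply Qm; lra. apply Hy; lra. }
    specialize (Hub z H). lra.
Qed.

Fixpoint tpart (g : R -> R) (c d : R) (l : list (R*R*R)) : Prop :=
  match l with
  | nil => c = d
  | (lo, hi, tg) :: l' => lo = c /\ lo < hi /\ lo <= tg <= hi /\ hi - lo < g tg /\ tpart g hi d l'
  end.

Lemma tpart_app g y x tg : forall l c, tpart g c y l -> y < x -> y <= tg <= x -> x - y < g tg ->
  tpart g c x (l ++ (y, x, tg) :: nil).
Proof.
  induction l as [|[[lo hi] t] l IH]; simpl; intros c H H1 H2 H3.
  - subst. repeat split; auto; lra.
  - destruct H as [? [? [? [? ?]]]]. repeat split; try tauto. apply IH; auto.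
Qed.

Lemma cousin g c d : c <= d -> (forall t, c <= t <= d -> 0 < g t) ->
  exists l, tpart g c d l.
Proof.
  intros Hcd Hg.
  apply (real_ind (fun x => exists l, tpart g c x l) c d Hcd); [| |lra].
  - intros x Hx IH. destruct (Req_dec x c) as [->|Hne].
    + exists nil. reflexivity.
    + assert (Hgx := Hg x Hx). set (y := Rmax c (x - g x / 2)).
      assert (y < x) by (unfold y; apply Rmax_lub_lt; lra).
      assert (c <= y) by apply Rmax_l.
      assert (x - g x / 2 <= y) by apply Rmax_r.
      destruct (IH y ltac:(lra)) as [l Hl].
      exists (l ++ (y, x, x) :: nil). apply tpart_app; auto; lra.
  - intros x Hx IH. exists (g x). split; [apply Hg; lra|].
    intros y Hy Hyb. destruct (IH x ltac:(lra)) as [l Hl].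
    exists (l ++ (x, y, x) :: nil). apply tpart_app; auto; lra.
Qed.

Definition mapfst (l : list (R*R*R)) : list (R*R) := map (fun p => (fst (fst p), snd (fst p))) l.

Lemma tpart_chain g l : forall c d, tpart g c d l -> chain_in c d (mapfst l).
Proof.
  induction l as [|[[lo hi] t] l IH]; simpl; intros c d H; [lra|].
  destruct H as [? [? [? [? ?]]]]. repeat split; try lra. apply IH; auto.
Qed.

Lemma tpart_in g l : forall c d x, tpart g c d l -> In x l ->
  fst (fst x) <= snd x <= snd (fst x) /\ snd (fst x) - fst (fst x) < g (snd x).
Proof.
  induction l as [|[[lo hi] t] l IH]; simpl; intros c d x H Hin; [contradiction|].
  destruct H as [? [? [? [? ?]]]]. destruct Hin as [<-|Hin]; simpl; auto.
  eapply IH; eauto.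
Qed.

Lemma chain_filter (q : R*R*R -> bool) d l : forall c,
  chain_in c d (mapfst l) -> chain_in c d (mapfst (filter q l)).
Proof.
  induction l as [|[[lo hi] t] l IH]; simpl; intros c H; auto.
  destruct H as [? [? ?]]. destruct (q (lo, hi, t)); simpl.
  - repeat split; auto.
  - apply chain_mono_l with hi; auto. lra.
Qed.

Lemma lenL_split (q : R*R*R -> bool) l :
  lenL (mapfst l) = lenL (mapfst (filter q l)) + lenL (mapfst (filter (fun x => negb (q x)) l)).
Proof.
  induction l as [|x l IH]; simpl; [lra|]. unfold lenL in *. simpl.
  destruct (q x); simpl; rewrite IH; ring.
Qed.

Lemma inside_bound A B d L : forall c, chain_in c d (mapfst L) ->
  (forall x, In x L -> A <= fst (fst x) /\ snd (fst x) <= B) ->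
  lenL (mapfst L) <= Rmax 0 (B - Rmax A c).
Proof.
  induction L as [|[[lo hi] t] L IH]; simpl; intros c H Hin.
  - unfold lenL; simpl. apply Rmax_l.
  - destruct H as [? [? ?]]. unfold lenL in *. simpl.
    assert (H2 := Hin (lo, hi, t) (or_introl eq_refl)). simpl in H2.
    specialize (IH hi H1 (fun x Hx => Hin x (or_intror Hx))).
    revert IH. unfold Rmax. repeat destruct Rle_dec; intros; lra.
Qed.

Lemma group (a b : nat -> R) (idx : R -> nat) d (Hab : forall n, a n <= b n) :
  forall M L c, chain_in c d (mapfst L) ->
  (forall x, In x L -> (idx (snd x) <= M)%nat /\ a (idx (snd x)) <= fst (fst x)
       /\ snd (fst x) <= b (idx (snd x))) ->
  lenL (mapfst L) <= sum_f_R0 (fun n => b n - a n) M.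
Proof.
  induction M as [|M IH]; intros L c HL Hin.
  - simpl. eapply Rle_trans. apply (inside_bound (a 0%nat) (b 0%nat) d L c HL).
    { intros x Hx. destruct (Hin x Hx) as [H1 [H2 H3]].
      assert (idx (snd x) = 0%nat) by lia. rewrite H in H2, H3. auto. }
    specialize (Hab 0%nat). unfold Rmax. repeat destruct Rle_dec; lra.
  - set (q := fun x : R*R*R => Nat.eqb (idx (snd x)) (S M)).
    rewrite (lenL_split q L). simpl.
    assert (A1 : lenL (mapfst (filter q L)) <= b (S M) - a (S M)).
    { eapply Rle_trans. apply (inside_bound (a (S M)) (b (S M)) d _ c).
      apply chain_filter; auto.
      { intros x Hx. apply filter_In in Hx. destruct Hx as [Hx Hq].
        unfold q in Hq. apply Nat.eqb_eq in Hq. destruct (Hin x Hx) as [H1 [H2 H3]].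
        rewrite Hq in H2, H3. auto. }
      specialize (Hab (S M)). unfold Rmax. repeat destruct Rle_dec; lra. }
    assert (A2 : lenL (mapfst (filter (fun x => negb (q x)) L)) <= sum_f_R0 (fun n => b n - a n) M).
    { apply IH with c. apply chain_filter; auto.
      intros x Hx. apply filter_In in Hx. destruct Hx as [Hx Hq].
      unfold q in Hq. apply Bool.negb_true_iff in Hq. apply Nat.eqb_neq in Hq.
      destruct (Hin x Hx) as [H1 [H2 H3]]. repeat split; auto. lia. }
    lra.
Qed.

Lemma main_bound g f (E : R -> Prop) (badb : R*R*R -> bool) eps d (He : 0 <= eps) l :
  (forall x, In x l -> badb x = false ->
     Rabs (f (snd (fst x)) - f (fst (fst x))) <= eps * (snd (fst x) - fst (fst x))) ->
  forall c, tpart g c d l ->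
  Rabs (f d - f c) <= varL f (mapfst (filter badb l)) + eps * (d - c).
Proof.
  induction l as [|[[lo hi] t] l IH]; simpl; intros Hgood c H.
  - subst. unfold varL; simpl. rewrite Rminus_diag, Rabs_R0. lra.
  - destruct H as [Hc [Hlh [Ht [Hg Hrest]]]]. subst lo.
    assert (Hd : hi <= d).
    { clear -Hrest. revert hi Hrest. induction l as [|[[lo' hi'] t'] l IH]; simpl; intros hi0 Hr; [lra|].
      destruct Hr as [? [? [? [? Hr']]]]. specialize (IH _ Hr'). lra. }
    specialize (IH (fun x Hx => Hgood x (or_intror Hx)) hi Hrest).
    pose proof (Rabs_triang (f d - f hi) (f hi - f c)).
    replace (f d - f hi + (f hi - f c)) with (f d - f c) in H by ring.
    destruct (badb (c, hi, t)) eqn:Eb; simpl; unfold varL in *; simpl.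
    + assert (eps*(d-hi) <= eps*(d-c)) by (apply Rmult_le_compat_l; lra). lra.
    + specialize (Hgood (c, hi, t) (or_introl eq_refl) Eb). simpl in Hgood.
      assert (eps*(d-hi) + eps*(hi-c) = eps*(d-c)) by ring. lra.
Qed.

Lemma tpart_le g l : forall c d, tpart g c d l -> c <= d.
Proof.
  induction l as [|[[lo hi] t] l IH]; simpl; intros c d H; [lra|].
  destruct H as [? [? [? [? Hr]]]]. specialize (IH _ _ Hr). lra.
Qed.

Lemma tpart_range g l : forall c d x, tpart g c d l -> In x l -> c <= snd x <= d.
Proof.
  induction l as [|[[lo hi] t] l IH]; simpl; intros c d x H Hx; [contradiction|].
  destruct H as [? [? [? [? Hr]]]]. pose proof (tpart_le _ _ _ _ Hr).
  destruct Hx as [<-|Hx]; simpl. lra. specialize (IH _ _ _ Hr Hx). lra.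
Qed.

Lemma small_all x K : 0 <= K -> (forall eps, 0 < eps -> Rabs x <= eps * K + eps) -> x = 0.
Proof.
  intros HK H. destruct (Req_dec x 0); auto. exfalso.
  assert (Hx : 0 < Rabs x) by (apply Rabs_pos_lt; auto).
  specialize (H (Rabs x / (2 * (K + 1))) ltac:(apply Rdiv_lt_0_compat; lra)).
  replace (Rabs x / (2 * (K + 1)) * K + Rabs x / (2 * (K + 1))) with (Rabs x / 2) in H
    by (field; lra). lra.
Qed.

Lemma AC_deriv0 c d f : c <= d -> AC_on c d f ->
  negligible (fun t => c <= t <= d /\ ~ derivable_pt_lim f t 0) -> f c = f d.
Proof.
  intros Hcd Hac Hneg.
  set (E := fun t => c <= t <= d /\ ~ derivable_pt_lim f t 0) in *.
  assert (forall eps, 0 < eps -> Rabs (f d - f c) <= eps * (d - c) + eps).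
  2:{ symmetry. apply Rminus_diag_uniq. apply (small_all _ (d - c)); auto; lra. }
  intros eps Heps.
  destruct (Hac eps Heps) as [del [Hdel Hac']].
  destruct (Hneg (del/2) ltac:(lra)) as [a [b [Hab [Hsum Hcov]]]].
  assert (Hidx : forall t, exists n, E t -> a n < t < b n).
  { intros t. destruct (classic (E t)) as [HE|HE].
    - destruct (Hcov t HE) as [n Hn]. exists n; auto.
    - exists 0%nat; tauto. }
  set (idxf := fun t => proj1_sig (constructive_indefinite_description _ (Hidx t))).
  assert (Hidxf : forall t, E t -> a (idxf t) < t < b (idxf t)).
  { intros t. unfold idxf. destruct (constructive_indefinite_description _ (Hidx t)); auto. }
  assert (Hr : forall t, exists r, 0 < r /\ (~ E t -> c <= t <= d ->
      forall h, Rabs h < r -> Rabs (f (t + h) - f t) <= eps * Rabs h)).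
  { intros t. destruct (classic (~ E t /\ c <= t <= d)) as [[HE Ht]|HN].
    - assert (Hder : derivable_pt_lim f t 0) by (apply NNPP; intro; apply HE; split; auto).
      destruct (Hder eps Heps) as [r Hr]. exists r. split; [apply cond_pos|].
      intros _ _ h Hh. destruct (Req_dec h 0) as [->|Hh0].
      + rewrite Rplus_0_r, Rminus_diag, !Rabs_R0. lra.
      + specialize (Hr h Hh0 Hh). rewrite Rminus_0_r in Hr.
        replace (f (t + h) - f t) with ((f (t + h) - f t) / h * h) by (field; auto).
        rewrite Rabs_mult. apply Rmult_le_compat_r; [apply Rabs_pos| lra].
    - exists 1. split; [lra|]. intros; exfalso; tauto. }
  set (rf := fun t => proj1_sig (constructive_indefinite_description _ (Hr t))).
  assert (Hrf : forall t, 0 < rf t /\ (~ E t -> c <= t <= d ->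
      forall h, Rabs h < rf t -> Rabs (f (t + h) - f t) <= eps * Rabs h)).
  { intros t. unfold rf. destruct (constructive_indefinite_description _ (Hr t)); auto. }
  set (g := fun t => if excluded_middle_informative (E t)
                     then Rmin (t - a (idxf t)) (b (idxf t) - t) else rf t).
  destruct (cousin g c d Hcd) as [l Hl].
  { intros t Ht. unfold g. destruct excluded_middle_informative as [HE|HE].
    - destruct (Hidxf t HE). apply Rmin_glb_lt; lra.
    - apply Hrf. }
  set (badb := fun x : R*R*R => if excluded_middle_informative (E (snd x)) then true else false).
  assert (Hin : forall x, In x l -> c <= snd x <= d).
  { intros x Hx. eapply tpart_range; eauto. }
  assert (B1 : Rabs (f d - f c) <= varL f (mapfst (filter badb l)) + eps * (d - c)).
  { apply (main_bound g f E badb eps d ltac:(lra) l); auto.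
    intros [[lo hi] t] Hx Hb. simpl.
    destruct (tpart_in g l c d _ Hl Hx) as [[H1 H2] H3]. simpl in H1, H2, H3.
    unfold badb in Hb; simpl in Hb. destruct excluded_middle_informative as [HE|HE]; [discriminate|].
    unfold g in H3. destruct excluded_middle_informative as [HE'|_]; [contradiction|].
    assert (Ht := Hin _ Hx). simpl in Ht.
    destruct (Hrf t) as [_ Hd].
    assert (A1 := Hd HE Ht (hi - t) ltac:(rewrite Rabs_right; lra)).
    assert (A2 := Hd HE Ht (lo - t) ltac:(rewrite Rabs_left1; lra)).
    replace (t + (hi - t)) with hi in A1 by ring. replace (t + (lo - t)) with lo in A2 by ring.
    rewrite (Rabs_right (hi - t)) in A1 by lra. rewrite (Rabs_left1 (lo - t)) in A2 by lra.
    pose proof (Rabs_triang (f hi - f t) (f t - f lo)).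
    replace (f hi - f t + (f t - f lo)) with (f hi - f lo) in H by ring.
    rewrite (Rabs_minus_sym (f t)) in H. lra. }
  set (L := filter badb l).
  set (M := fold_right (fun x m => Nat.max (idxf (snd x)) m) 0%nat L).
  assert (HM : forall x, In x L -> (idxf (snd x) <= M)%nat).
  { unfold M. clear. induction L as [|y L IH]; simpl; intros x Hx; [contradiction|].
    destruct Hx as [<-|Hx]; [lia|]. specialize (IH x Hx). lia. }
  assert (Hlen : lenL (mapfst L) <= sum_f_R0 (fun n => b n - a n) M).
  { apply (group a b idxf d Hab M L c).
    - apply chain_filter. eapply tpart_chain; eauto.
    - intros x Hx. split; [apply HM; auto|].
      unfold L in Hx. apply filter_In in Hx. destruct Hx as [Hx Hb].
      destruct (tpart_in g l c d _ Hl Hx) as [[H1 H2] H3].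
      unfold badb in Hb. destruct excluded_middle_informative as [HE|HE]; [|discriminate].
      unfold g in H3. destruct excluded_middle_informative as [_|HE']; [|contradiction].
      pose proof (Rmin_l (snd x - a (idxf (snd x))) (b (idxf (snd x)) - snd x)).
      pose proof (Rmin_r (snd x - a (idxf (snd x))) (b (idxf (snd x)) - snd x)).
      split; lra. }
  assert (Hv : varL f (mapfst L) < eps).
  { apply Hac'. apply chain_filter. eapply tpart_chain; eauto.
    specialize (Hsum M). unfold lenL in Hlen. lra. }
  fold L in B1. lra.
Qed.

Lemma deriv_affine_unique F x d K m : (forall s, F s = K + m * s) ->
  derivable_pt_lim F x d -> d = m.
Proof.
  intros HF Hd. apply (uniqueness_limite F x); auto.
  intros eps He. exists (mkposreal 1 Rlt_0_1). intros h Hh _. rewrite !HF.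
  replace ((K + m * (x + h) - (K + m * x)) / h - m) with 0 by (field; auto).
  rewrite Rabs_R0; auto.
Qed.

Lemma ham_facts lam gam u t : hamiltonian_eqs lam gam u t ->
  derivable_pt_lim (fun s => coord 0 (lam s)) t (-(snd (u t) * coord 2 (lam t) / 2)) /\
  derivable_pt_lim (fun s => coord 1 (lam s)) t (fst (u t) * coord 2 (lam t) / 2) /\
  derivable_pt_lim (fun s => coord 2 (lam s)) t 0 /\
  derivable_pt_lim (fun s => coord 0 (gam s)) t (fst (u t)) /\
  derivable_pt_lim (fun s => coord 1 (gam s)) t (snd (u t)).
Proof.
  intros H.
  destruct (H 0%nat ltac:(lia)) as [[d0 [A0 B0]] [e0 [C0 D0]]].
  destruct (H 1%nat ltac:(lia)) as [[d1 [A1 B1]] [e1 [C1 D1]]].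
  destruct (H 2%nat ltac:(lia)) as [[d2 [A2 B2]] _].
  remember (lam t) as l. remember (gam t) as q. remember (u t) as w.
  destruct l as [[a b] c], q as [[x y] z], w as [w1 w2]. simpl in *.
  assert (E0 : d0 = w2 * c / 2).
  { eapply deriv_affine_unique with (K := w1 * (a * 1 + b * 0 + c * - (y / 2)) + w2 * (a * 0 + b * 1)).
    2: exact A0. intro s; unfold Ham, pairing, X1, X2; simpl. field. }
  assert (E1 : d1 = - (w1 * c / 2)).
  { eapply deriv_affine_unique with (K := w1 * (a * 1 + b * 0) + w2 * (a * 0 + b * 1 + c * (x / 2))).
    2: exact A1. intro s; unfold Ham, pairing, X1, X2; simpl; field. }
  assert (E2 : d2 = 0).
  { eapply deriv_affine_unique with (K := w1 * (a * 1 + b * 0 + c * - (y / 2)) + w2 * (a * 0 + b * 1 + c * (x / 2))).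
    2: exact A2. intro s; unfold Ham, pairing, X1, X2; simpl; field. }
  assert (F0 : e0 = w1).
  { eapply deriv_affine_unique with (K := w1 * (b * 0 + c * - (y / 2)) + w2 * (b * 1 + c * (x / 2))).
    2: exact C0. intro s; unfold Ham, pairing, X1, X2; simpl; field. }
  assert (F1 : e1 = w2).
  { eapply deriv_affine_unique with (K := w1 * (a * 1 + c * - (y / 2)) + w2 * (a * 0 + c * (x / 2))).
    2: exact C1. intro s; unfold Ham, pairing, X1, X2; simpl; field. }
  subst d0 d1 d2 e0 e1.
  rewrite Ropp_involutive in B1.
  rewrite Ropp_0 in B2.
  repeat split; auto.
Qed.

Definition good (lam gam : R -> R3) (u : R -> R * R) (lam0 t : R) : Prop :=
  hamiltonian_eqs lam gam u t /\ (Rabs (fst (u t)) <= 1 /\ Rabs (snd (u t)) <= 1) /\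
  (Ham (lam t) (gam t) (u t) = lam0 /\ Rabs (phi1 lam gam t) + Rabs (phi2 lam gam t) = lam0).

Lemma phi1_eq lam gam t : phi1 lam gam t = coord 0 (lam t) - coord 2 (lam t) * coord 1 (gam t) / 2.
Proof. unfold phi1. destruct (lam t) as [[a b] c], (gam t) as [[x y] z]. simpl. field. Qed.
Lemma phi2_eq lam gam t : phi2 lam gam t = coord 1 (lam t) + coord 2 (lam t) * coord 0 (gam t) / 2.
Proof. unfold phi2. destruct (lam t) as [[a b] c], (gam t) as [[x y] z]. simpl. field. Qed.

Lemma good_u lam gam u lam0 t : good lam gam u lam0 t ->
  fst (u t) * phi1 lam gam t = Rabs (phi1 lam gam t) /\
  snd (u t) * phi2 lam gam t = Rabs (phi2 lam gam t) /\
  Rabs (fst (u t)) <= 1 /\ Rabs (snd (u t)) <= 1.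
Proof.
  intros [_ [[H1 H2] [H3 H4]]].
  change (Ham (lam t) (gam t) (u t)) with
    (fst (u t) * phi1 lam gam t + snd (u t) * phi2 lam gam t) in H3.
  set (a := fst (u t)) in *. set (b := snd (u t)) in *.
  set (x := phi1 lam gam t) in *. set (y := phi2 lam gam t) in *.
  assert (A : a * x <= Rabs x).
  { eapply Rle_trans. apply Rle_abs. rewrite Rabs_mult.
    pose proof (Rabs_pos x). nra. }
  assert (B : b * y <= Rabs y).
  { eapply Rle_trans. apply Rle_abs. rewrite Rabs_mult.
    pose proof (Rabs_pos y). nra. }
  repeat split; auto; lra.
Qed.

Lemma u_sign a x : a * x = Rabs x -> 0 < x -> a = 1.
Proof. intros H Hx. rewrite Rabs_right in H by lra. apply Rmult_eq_reg_r with x; lra. Qed.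
Lemma u_sign' a x : a * x = Rabs x -> x < 0 -> a = -1.
Proof. intros H Hx. rewrite Rabs_left in H by lra. apply Rmult_eq_reg_r with x; lra. Qed.

Lemma u_sigma a x s : a * x = Rabs x -> (s = 1 \/ s = -1) -> 0 < s * x -> a = s.
Proof.
  intros H [->| ->] Hx. apply (u_sign a x); lra. apply (u_sign' a x); lra.
Qed.

Lemma dlin f g k m t df dg : derivable_pt_lim f t df -> derivable_pt_lim g t dg ->
  derivable_pt_lim (fun y => f y + k * g y + m * y) t (df + k * dg + m).
Proof.
  intros Hf Hg.
  pose proof (derivable_pt_lim_scal g k t dg Hg) as H1.
  pose proof (derivable_pt_lim_scal id m t 1 (derivable_pt_lim_id t)) as H2.
  pose proof (derivable_pt_lim_plus _ _ _ _ _ (derivable_pt_lim_plus _ _ _ _ _ Hf H1) H2) as H3.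
  rewrite Rmult_1_r in H3. exact H3.
Qed.

Lemma AC_lin a b f g k m : AC_on a b f -> AC_on a b g -> AC_on a b (fun y => f y + k * g y + m * y).
Proof.
  intros Hf Hg. apply AC_plus. apply AC_plus; auto. apply AC_scal; auto.
  apply AC_scal, AC_id.
Qed.

Definition Hyps (T : R) (lam gam : R -> R3) (u : R -> R * R) (lam0 : R) : Prop :=
  (forall k, (k < 3)%nat -> AC_on 0 T (fun t => coord k (gam t))) /\
  (forall k, (k < 3)%nat -> AC_on 0 T (fun t => coord k (lam t))) /\
  ae_on 0 T (good lam gam u lam0).

Lemma pz_const T lam gam u lam0 : Hyps T lam gam u lam0 ->
  forall x, 0 <= x <= T -> coord 2 (lam x) = coord 2 (lam 0).
Proof.
  intros [Hg [Hl Hae]] x Hx. symmetry. apply (AC_deriv0 0 x (fun t => coord 2 (lam t))); [lra| |].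
  - apply AC_sub with 0 T; [apply Hl; lia|lra|lra].
  - apply neg_subset with (S' := fun t => 0 <= t <= T /\ ~ good lam gam u lam0 t); auto.
    intros t [Ht Hd]. split; [lra|]. intros Hgood. apply Hd.
    destruct Hgood as [He _]. apply (ham_facts _ _ _ _ He).
Qed.

Lemma neg_ends c x T (B : R -> Prop) : negligible (fun t => 0 <= t <= T /\ B t) ->
  forall (P : R -> Prop), (forall t, c < t < x -> 0 <= t <= T -> ~ B t -> P t) ->
  0 <= c -> x <= T ->
  negligible (fun t => c <= t <= x /\ ~ P t).
Proof.
  intros HB P HP Hc Hx.
  apply neg_subset with (S' := fun t => (t = c \/ t = x) \/ (0 <= t <= T /\ B t)).
  - intros t [Ht HN]. destruct (Req_dec t c); [left; left; auto|].
    destruct (Req_dec t x); [left; right; auto|]. right. split; [lra|].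
    apply NNPP. intro HnB. apply HN. apply HP; auto; lra.
  - apply neg_union; auto. apply neg_union; apply neg_point.
Qed.

Lemma LL1 T lam gam u lam0 p s c d : Hyps T lam gam u lam0 ->
  (forall t, 0 <= t <= T -> coord 2 (lam t) = p) ->
  0 <= c -> c <= d -> d <= T -> (s = 1 \/ s = -1) ->
  (p = 0 \/ forall x, c < x < d -> 0 < s * phi2 lam gam x) ->
  forall x, c <= x <= d -> phi1 lam gam x = phi1 lam gam c - s * p * (x - c).
Proof.
  intros HH Hp Hc Hcd HdT Hs Hsig x Hx. destruct HH as [Hg [Hl Hae]].
  set (psi := fun y => coord 0 (lam y) + (- p / 2) * coord 1 (gam y) + (s * p) * y).
  assert (E : psi c = psi x).
  { apply AC_deriv0; [lra| |].
    - apply AC_sub with 0 T; try lra. apply AC_lin; [apply Hl|apply Hg]; lia.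
    - apply (neg_ends c x T (fun t => ~ good lam gam u lam0 t) Hae); try lra.
      intros t Ht HtT Hgood. apply NNPP in Hgood.
      destruct (ham_facts _ _ _ _ (proj1 Hgood)) as [D0 [_ [_ [_ D1]]]].
      destruct (good_u _ _ _ _ _ Hgood) as [_ [U2 _]].
      rewrite (Hp t HtT) in D0.
      assert (Hu : snd (u t) * p = s * p).
      { destruct Hsig as [->|Hsig]; [ring|].
        rewrite (u_sigma _ _ _ U2 Hs (Hsig t ltac:(lra))). auto. }
      pose proof (dlin _ _ (- p / 2) (s * p) t _ _ D0 D1) as D.
      replace (- (snd (u t) * p / 2) + - p / 2 * snd (u t) + s * p) with 0 in D; auto.
      replace (- (snd (u t) * p / 2) + - p / 2 * snd (u t)) with (- (snd (u t) * p)) by field.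
      rewrite Hu. ring. }
  unfold psi in E. rewrite !phi1_eq, (Hp x), (Hp c) by lra.
  replace (coord 0 (lam x) - p * coord 1 (gam x) / 2) with
    (coord 0 (lam x) + - p / 2 * coord 1 (gam x) + s * p * x - s * p * x) by field.
  rewrite <- E. field.
Qed.

Lemma LL2 T lam gam u lam0 p s c d : Hyps T lam gam u lam0 ->
  (forall t, 0 <= t <= T -> coord 2 (lam t) = p) ->
  0 <= c -> c <= d -> d <= T -> (s = 1 \/ s = -1) ->
  (p = 0 \/ forall x, c < x < d -> 0 < s * phi1 lam gam x) ->
  forall x, c <= x <= d -> phi2 lam gam x = phi2 lam gam c + s * p * (x - c).
Proof.
  intros HH Hp Hc Hcd HdT Hs Hsig x Hx. destruct HH as [Hg [Hl Hae]].
  set (psi := fun y => coord 1 (lam y) + (p / 2) * coord 0 (gam y) + (- (s * p)) * y).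
  assert (E : psi c = psi x).
  { apply AC_deriv0; [lra| |].
    - apply AC_sub with 0 T; try lra. apply AC_lin; [apply Hl|apply Hg]; lia.
    - apply (neg_ends c x T (fun t => ~ good lam gam u lam0 t) Hae); try lra.
      intros t Ht HtT Hgood. apply NNPP in Hgood.
      destruct (ham_facts _ _ _ _ (proj1 Hgood)) as [_ [D0 [_ [D1 _]]]].
      destruct (good_u _ _ _ _ _ Hgood) as [U1 _].
      rewrite (Hp t HtT) in D0.
      assert (Hu : fst (u t) * p = s * p).
      { destruct Hsig as [->|Hsig]; [ring|].
        rewrite (u_sigma _ _ _ U1 Hs (Hsig t ltac:(lra))). auto. }
      pose proof (dlin _ _ (p / 2) (- (s * p)) t _ _ D0 D1) as D.
      replace (fst (u t) * p / 2 + p / 2 * fst (u t) + - (s * p)) with 0 in D; auto.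
      replace (fst (u t) * p / 2 + p / 2 * fst (u t)) with (fst (u t) * p) by field.
      rewrite Hu. ring. }
  unfold psi in E. rewrite !phi2_eq, (Hp x), (Hp c) by lra.
  replace (coord 1 (lam x) + p * coord 0 (gam x) / 2) with
    (coord 1 (lam x) + p / 2 * coord 0 (gam x) + - (s * p) * x + s * p * x) by field.
  rewrite <- E. field.
Qed.

Lemma cont_scal L U k f : cont_on L U f -> cont_on L U (fun w => k * f w).
Proof.
  intros Hf x Hx e He.
  assert (Hk : 0 < Rabs k + 1) by (pose proof (Rabs_pos k); lra).
  destruct (Hf x Hx (e / (Rabs k + 1))) as [d [Hd H]]; [apply Rdiv_lt_0_compat; lra|].
  exists d; split; auto. intros y Hy Hyx. specialize (H y Hy Hyx).
  replace (k * f y - k * f x) with (k * (f y - f x)) by ring. rewrite Rabs_mult.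
  apply Rle_lt_trans with ((Rabs k + 1) * Rabs (f y - f x)).
  { pose proof (Rabs_pos (f y - f x)). nra. }
  apply Rmult_lt_reg_l with (/ (Rabs k + 1)). { apply Rinv_0_lt_compat; lra. }
  rewrite <- Rmult_assoc, Rinv_l by lra. unfold Rdiv in H. lra.
Qed.

Lemma left_lim L U f t x K M : L <= t -> t < x -> x <= U -> cont_on L U f ->
  (forall y, t <= y < x -> f y = K + M * (y - t)) -> f x = K + M * (x - t).
Proof.
  intros Ht Htx HxU Hf Hy. apply NNPP; intro Hne.
  set (D := Rabs (f x - (K + M * (x - t)))).
  assert (HD : 0 < D) by (apply Rabs_pos_lt; lra).
  destruct (Hf x ltac:(lra) (D/2) ltac:(lra)) as [d [Hd Hc]].
  assert (HM : 0 < Rabs M + 1) by (pose proof (Rabs_pos M); lra).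
  set (r := Rmin (Rmin d (x - t)) (D / (2 * (Rabs M + 1)))).
  assert (Hr1 : r <= d) by (unfold r; eapply Rle_trans; [apply Rmin_l|apply Rmin_l]).
  assert (Hr2 : r <= x - t) by (unfold r; eapply Rle_trans; [apply Rmin_l|apply Rmin_r]).
  assert (Hr3 : r <= D / (2 * (Rabs M + 1))) by (unfold r; apply Rmin_r).
  assert (Hr0 : 0 < r).
  { unfold r. apply Rmin_glb_lt; [apply Rmin_glb_lt; lra|]. apply Rdiv_lt_0_compat; lra. }
  set (y := x - r / 2).
  specialize (Hc y ltac:(unfold y; lra) ltac:(unfold y; rewrite Rabs_left; lra)).
  rewrite (Hy y) in Hc by (unfold y; lra).
  assert (A : Rabs M * (r/2) < D / 2).
  { apply Rle_lt_trans with (Rabs M * (D / (2 * (Rabs M + 1)) / 2)).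
    { apply Rmult_le_compat_l; [apply Rabs_pos| lra]. }
    apply Rmult_lt_reg_r with (2 * (Rabs M + 1) * 2). lra.
    field_simplify; try lra. pose proof (Rabs_pos M). nra. }
  assert (B : f x - (K + M * (x - t)) = (f x - (K + M * (y - t))) + M * (y - x)) by ring.
  unfold D in *. rewrite B in HD.
  pose proof (Rabs_triang (f x - (K + M * (y - t))) (M * (y - x))).
  rewrite Rabs_mult in H. rewrite (Rabs_left (y - x)) in H by (unfold y; lra).
  replace (- (y - x)) with (r/2) in H by (unfold y; field).
  rewrite Rabs_minus_sym in Hc. fold D in HD. unfold D in HD. rewrite B in *. lra.
Qed.

Lemma left_pos L U f a x : L <= a -> a < x -> x <= U -> cont_on L U f ->
  (forall y, a <= y < x -> 0 < f y) -> 0 <= f x.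
Proof.
  intros Ha Hax HxU Hf Hy. apply Rnot_lt_le. intro Hn.
  destruct (Hf x ltac:(lra) (- f x) ltac:(lra)) as [d [Hd Hc]].
  set (y := Rmax a (x - d/2)).
  assert (a <= y) by apply Rmax_l. assert (x - d/2 <= y) by apply Rmax_r.
  assert (y < x) by (unfold y; apply Rmax_lub_lt; lra).
  specialize (Hc y ltac:(lra) ltac:(rewrite Rabs_left; lra)).
  specialize (Hy y ltac:(lra)). pose proof (Rle_abs (f y - f x)). lra.
Qed.

Lemma sign_const L U f c d : cont_on L U f -> L <= c -> d <= U ->
  (forall z, c < z < d -> f z <> 0) -> forall x y, c < x < d -> c < y < d -> 0 < f x * f y.
Proof.
  intros Hf Hc Hd Hnz.
  assert (W : forall x y, c < x < d -> c < y < d -> x <= y -> 0 < f x * f y).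
  { intros x y Hx Hy Hxy.
    assert (Hg := cont_scal L U (f x) f Hf).
    apply (real_ind (fun z => 0 < f x * f z) x y Hxy); [| |lra].
    - intros z Hz IH. destruct (Req_dec z x) as [->|Hne].
      + assert (f x <> 0) by (apply Hnz; lra).
        apply Rsqr_pos_lt in H. unfold Rsqr in H. lra.
      + assert (0 <= f x * f z).
        { apply (left_pos L U (fun w => f x * f w) x z); try lra; auto. }
        assert (f x <> 0) by (apply Hnz; lra). assert (f z <> 0) by (apply Hnz; lra).
        assert (f x * f z <> 0) by (apply Rmult_integral_contrapositive; auto). lra.
    - intros z Hz IH. specialize (IH z ltac:(lra)).
      destruct (Hg z ltac:(lra) (f x * f z) IH) as [e [He Hc']].
      exists e. split; auto. intros w Hw Hwy.
      specialize (Hc' w ltac:(lra) ltac:(rewrite Rabs_right; lra)).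
      pose proof (Rle_abs (f x * f z - f x * f w)). rewrite Rabs_minus_sym in Hc'. lra. }
  intros x y Hx Hy. destruct (Rle_dec x y). apply W; auto.
  rewrite Rmult_comm. apply W; auto; lra.
Qed.

Definition LLrel (L U : R) (F G : R -> R) (a : R) : Prop :=
  forall c d s, L <= c -> c <= d -> d <= U -> (s = 1 \/ s = -1) ->
    (forall x, c < x < d -> 0 < s * F x) ->
    forall x, c <= x <= d -> G x = G c + a * s * (x - c).

Definition DynH (L U : R) (F G : R -> R) (a Lam : R) : Prop :=
  cont_on L U F /\ cont_on L U G /\ LLrel L U F G a /\ LLrel L U G F (- a) /\ a <> 0 /\
  forall x, L <= x <= U -> Rabs (F x) + Rabs (G x) = Lam.

Lemma DynH_swap L U F G a Lam : DynH L U F G a Lam -> DynH L U G F (- a) Lam.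
Proof.
  intros [H1 [H2 [H3 [H4 [H5 H6]]]]]. repeat split; auto.
  - rewrite Ropp_involutive. auto.
  - lra.
  - intros x Hx. rewrite Rplus_comm. auto.
Qed.

Lemma Rabs_m1 : Rabs (-1) = 1.
Proof. rewrite Rabs_left; lra. Qed.

Definition sgnv (r : R) : R := if Rlt_dec 0 r then 1 else -1.

Lemma sgnv_pm r : sgnv r = 1 \/ sgnv r = -1.
Proof. unfold sgnv; destruct Rlt_dec; auto. Qed.
Lemma sgnv_pos r : r <> 0 -> 0 < sgnv r * r.
Proof. unfold sgnv; destruct Rlt_dec; intros; lra. Qed.

Lemma GFL L U F G a Lam t s : DynH L U F G a Lam -> L <= t <= U -> (s = 1 \/ s = -1) ->
  0 < s * F t -> 0 <= G t * a * s ->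
  forall x, t <= x <= U -> x <= t + s * F t / Rabs a ->
  G x = G t + a * s * (x - t) /\ F x = F t - s * Rabs a * (x - t).
Proof.
  intros HD Ht Hs HF HG.
  destruct HD as [cF [cG [LG [LF [Ha HE]]]]].
  assert (Haw : 0 < Rabs a) by (apply Rabs_pos_lt; auto).
  assert (Hss : s * s = 1) by (destruct Hs as [->| ->]; ring).
  assert (He : 0 < s * F t / Rabs a) by (apply Rdiv_lt_0_compat; auto).
  set (m := Rmin (t + s * F t / Rabs a) U).
  assert (Hm1 : m <= t + s * F t / Rabs a) by apply Rmin_l.
  assert (Hm2 : m <= U) by apply Rmin_r.
  assert (Hm3 : t <= m) by (apply Rmin_glb; lra).
  intros x Hx Hxe.
  apply (real_ind (fun z => G z = G t + a * s * (z - t) /\ F z = F t - s * Rabs a * (z - t)) t m Hm3);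
    [| |split; [lra| apply Rmin_glb; lra]].
  - intros z Hz IH. destruct (Req_dec z t) as [->|Hne].
    + split; ring.
    + split.
      * apply (left_lim L U G t z); try lra; auto. intros y Hy. apply IH; lra.
      * replace (F t - s * Rabs a * (z - t)) with (F t + (- (s * Rabs a)) * (z - t)) by ring.
        apply (left_lim L U F t z); try lra; auto. intros y Hy.
        rewrite (proj2 (IH y Hy)). ring.
  - intros z Hz IH.
    assert (HFz : s * F z = s * F t - Rabs a * (z - t)).
    { rewrite (proj2 (IH z ltac:(lra))). replace (s * (F t - s * Rabs a * (z - t)))
        with (s * F t - (s * s) * Rabs a * (z - t)) by ring. rewrite Hss. ring. }
    assert (HFz' : 0 < s * F z).
    { rewrite HFz. assert (Rabs a * (z - t) < s * F t).
      { assert (z - t < s * F t / Rabs a) by lra.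
        apply Rmult_lt_compat_l with (r := Rabs a) in H; auto.
        replace (Rabs a * (s * F t / Rabs a)) with (s * F t) in H by (field; lra). lra. }
      lra. }
    destruct (cF z ltac:(lra) (s * F z) HFz') as [del [Hdel Hc]].
    set (h := Rmin del (U - z)).
    assert (Hh0 : 0 < h) by (unfold h; apply Rmin_glb_lt; lra).
    assert (Hh1 : h <= del) by apply Rmin_l. assert (Hh2 : h <= U - z) by apply Rmin_r.
    set (d0 := z + h / 2).
    assert (Hpos : forall w, t < w < d0 -> 0 < s * F w).
    { intros w Hw. destruct (Rle_dec w z).
      - rewrite (proj2 (IH w ltac:(lra))).
        replace (s * (F t - s * Rabs a * (w - t))) with (s * F t - (s * s) * Rabs a * (w - t)) by ring.
        rewrite Hss. assert (Rabs a * (w - t) <= Rabs a * (z - t)) by (apply Rmult_le_compat_l; lra).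
        lra.
      - specialize (Hc w ltac:(unfold d0 in Hw; lra) ltac:(rewrite Rabs_right; unfold d0 in Hw; lra)).
        assert (H0 : Rabs (s * (F w - F z)) = Rabs (F w - F z)).
        { rewrite Rabs_mult. destruct Hs as [-> | ->]; [rewrite Rabs_R1|rewrite Rabs_m1]; ring. }
        assert (H1 := Rle_abs (- (s * (F w - F z)))). rewrite Rabs_Ropp in H1. lra. }
    assert (HGw : forall w, t <= w <= d0 -> G w = G t + a * s * (w - t)).
    { apply (LG t d0 s); unfold d0 in *; try lra; auto. }
    set (tau := sgnv (a * s)).
    assert (Has : a * s <> 0) by (apply Rmult_integral_contrapositive; split; auto; destruct Hs; lra).
    assert (Htau : 0 < tau * (a * s)) by apply sgnv_pos, Has.
    assert (Htau1 : tau = 1 \/ tau = -1) by apply sgnv_pm.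
    assert (HtG : 0 <= tau * G t).
    { destruct Htau1 as [E|E]; rewrite E in *; nra. }
    assert (Hposg : forall w, t < w < d0 -> 0 < tau * G w).
    { intros w Hw. rewrite HGw by lra. nra. }
    assert (HFw : forall w, t <= w <= d0 -> F w = F t + - a * tau * (w - t)).
    { apply (LF t d0 tau); unfold d0 in *; try lra; auto. }
    assert (Hat : - a * tau = - s * Rabs a).
    { clear -Htau1 Hs Htau Ha. destruct Htau1 as [E|E]; rewrite E in *; destruct Hs as [E'|E']; subst s;
      destruct (Rcase_abs a); [rewrite (Rabs_left a) by lra | rewrite (Rabs_right a) by lra
        |rewrite (Rabs_left a) by lra | rewrite (Rabs_right a) by lra
        |rewrite (Rabs_left a) by lra | rewrite (Rabs_right a) by lra
        |rewrite (Rabs_left a) by lra | rewrite (Rabs_right a) by lra]; lra. }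
    exists (h / 2). split; [lra|]. intros w Hw Hwm. split.
    + apply HGw. unfold d0. lra.
    + rewrite HFw by (unfold d0; lra). rewrite Hat. ring.
Qed.

Lemma nat_arch r : exists n : nat, r < INR n.
Proof.
  destruct (archimed r) as [H _]. destruct (Z_le_gt_dec (up r) 0) as [l|g].
  - exists 0%nat. simpl. apply IZR_le in l. lra.
  - exists (Z.to_nat (up r)). rewrite INR_IZR_INZ, Z2Nat.id by lia. lra.
Qed.

Lemma spm_abs s y : (s = 1 \/ s = -1) -> 0 < s * y -> s * y = Rabs y.
Proof.
  intros [-> | ->] H.
  - rewrite Rabs_right; lra.
  - rewrite Rabs_left; lra.
Qed.

Lemma before_e L U F G a Lam t s : DynH L U F G a Lam -> L <= t <= U -> (s = 1 \/ s = -1) ->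
  0 < s * F t -> 0 <= G t * a * s ->
  forall x, t < x <= U -> x < t + s * F t / Rabs a -> F x <> 0 /\ G x <> 0.
Proof.
  intros HD Ht Hs HF HG x Hx Hxe.
  destruct (GFL L U F G a Lam t s HD Ht Hs HF HG x ltac:(lra) ltac:(lra)) as [E1 E2].
  assert (Ha : a <> 0) by apply HD.
  assert (Haw : 0 < Rabs a) by (apply Rabs_pos_lt; auto).
  assert (Hss : s * s = 1) by (destruct Hs as [->| ->]; ring).
  split.
  - intro H0. rewrite H0 in E2.
    assert (s * F t = Rabs a * (x - t)).
    { assert (Eft : F t = s * Rabs a * (x - t)) by lra. rewrite Eft.
      replace (s * (s * Rabs a * (x - t))) with ((s * s) * Rabs a * (x - t)) by ring.
      rewrite Hss; ring. }
    assert (x - t < s * F t / Rabs a) by lra.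
    apply Rmult_lt_compat_l with (r := Rabs a) in H1; auto.
    replace (Rabs a * (s * F t / Rabs a)) with (s * F t) in H1 by (field; lra). lra.
  - intro H0. rewrite H0 in E1.
    assert (Has : a * s <> 0) by (apply Rmult_integral_contrapositive; split; auto; destruct Hs; lra).
    assert (0 < (a * s) * (a * s)) by (apply Rsqr_pos_lt in Has; unfold Rsqr in Has; lra).
    assert (0 = G t * a * s + (a * s) * (a * s) * (x - t)).
    { replace (G t * a * s + (a * s) * (a * s) * (x - t)) with ((G t + a * s * (x - t)) * (a * s)) by ring.
      rewrite <- E1. ring. }
    nra.
Qed.

Lemma at_e L U F G a Lam t s : DynH L U F G a Lam -> L <= t <= U -> (s = 1 \/ s = -1) ->
  0 < s * F t -> 0 <= G t * a * s -> t + s * F t / Rabs a <= U ->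
  F (t + s * F t / Rabs a) = 0.
Proof.
  intros HD Ht Hs HF HG He.
  assert (Ha : a <> 0) by apply HD.
  assert (Haw : 0 < Rabs a) by (apply Rabs_pos_lt; auto).
  assert (Hp : 0 < s * F t / Rabs a) by (apply Rdiv_lt_0_compat; auto).
  destruct (GFL L U F G a Lam t s HD Ht Hs HF HG (t + s * F t / Rabs a) ltac:(lra) ltac:(lra)) as [_ E2].
  rewrite E2. replace (t + s * F t / Rabs a - t) with (s * F t / Rabs a) by ring.
  replace (F t - s * Rabs a * (s * F t / Rabs a)) with (F t - (s * s) * F t) by (field; lra).
  destruct Hs as [-> | ->]; ring.
Qed.

Lemma ITER L U Lam : forall n F G a t s, DynH L U F G a Lam -> L <= t <= U -> (s = 1 \/ s = -1) ->
  0 < s * F t -> 0 <= G t * a * s ->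
  forall x, t < x <= U -> x < t + s * F t / Rabs a + INR n * (Lam / Rabs a) ->
  ((F x = 0 \/ G x = 0) <-> exists k : nat, x = t + s * F t / Rabs a + INR k * (Lam / Rabs a)) /\
  (forall k : nat, x = t + s * F t / Rabs a + INR k * (Lam / Rabs a) ->
     (Nat.even k = true -> F x = 0) /\ (Nat.even k = false -> G x = 0)).
Proof.
  induction n as [|n IH]; intros F G a t s HD Ht Hs HF HG x Hx Hxn.
  all: assert (Ha : a <> 0) by apply HD.
  all: assert (Haw : 0 < Rabs a) by (apply Rabs_pos_lt; auto).
  all: assert (HLam : 0 < Lam) by (destruct HD as [_ [_ [_ [_ [_ HE]]]]];
         rewrite <- (HE t Ht); assert (F t <> 0) by (intro E; rewrite E in HF; lra);
         pose proof (Rabs_pos_lt _ H); pose proof (Rabs_pos (G t)); lra).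
  all: assert (Hsp : 0 < Lam / Rabs a) by (apply Rdiv_lt_0_compat; auto).
  all: set (e := t + s * F t / Rabs a) in *; set (sp := Lam / Rabs a) in *.
  all: assert (Hte : t < e) by (unfold e; assert (0 < s * F t / Rabs a) by (apply Rdiv_lt_0_compat; auto); lra).
  all: assert (Hk : forall k : nat, e <= e + INR k * sp) by (intros k; pose proof (pos_INR k); nra).
  all: assert (Base : x < e -> ((F x = 0 \/ G x = 0) <-> exists k : nat, x = e + INR k * sp) /\
      (forall k : nat, x = e + INR k * sp -> (Nat.even k = true -> F x = 0) /\ (Nat.even k = false -> G x = 0))).
  all: try (intros Hxe; destruct (before_e L U F G a Lam t s HD Ht Hs HF HG x Hx Hxe) as [N1 N2];
        split; [split; [intros [E|E]; contradiction| intros [k Hk']; specialize (Hk k); lra]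
               | intros k Hk'; specialize (Hk k); lra]).
  - simpl in Hxn. apply Base. lra.
  - destruct (Rtotal_order x e) as [Hlt|[Heq|Hgt]].
    + apply Base; auto.
    + assert (HeU : e <= U) by lra. assert (HFe : F e = 0) by (apply (at_e L U F G a Lam t s); auto).
      rewrite Heq. split.
      * split; [intros _; exists 0%nat; simpl; ring| intros _; left; auto].
      * intros k Hk'. assert (INR k = 0).
        { assert (INR k * sp = 0) by lra. apply Rmult_integral in H. destruct H; lra. }
        replace 0 with (INR 0) in H by reflexivity. apply INR_eq in H. subst k.
        split; auto. simpl; discriminate.
    + assert (HeU : e <= U) by lra. assert (HFe : F e = 0) by (apply (at_e L U F G a Lam t s); auto).
      assert (HGe : Rabs (G e) = Lam).
      { destruct HD as [_ [_ [_ [_ [_ HE]]]]]. rewrite <- (HE e ltac:(lra)). rewrite HFe, Rabs_R0. ring. }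
      assert (HGe0 : G e <> 0) by (intro E; rewrite E, Rabs_R0 in HGe; lra).
      set (s' := sgnv (G e)).
      assert (Hs' : s' = 1 \/ s' = -1) by apply sgnv_pm.
      assert (Hs'p : 0 < s' * G e) by apply sgnv_pos, HGe0.
      specialize (IH G F (- a) e s' (DynH_swap _ _ _ _ _ _ HD) ltac:(lra) Hs' Hs'p
        ltac:(rewrite HFe; lra) x ltac:(lra)).
      assert (E1 : e + s' * G e / Rabs (- a) = e + sp).
      { rewrite Rabs_Ropp. rewrite (spm_abs s' (G e) Hs' Hs'p), HGe. reflexivity. }
      assert (E2 : Lam / Rabs (- a) = sp) by (rewrite Rabs_Ropp; reflexivity).
      rewrite E1, E2 in IH.
      destruct IH as [IH1 IH2].
      { rewrite S_INR in Hxn. lra. }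
      split.
      * split.
        -- intros H. destruct (proj1 IH1 ltac:(tauto)) as [k Hk'].
           exists (S k). rewrite S_INR. lra.
        -- intros [k Hk']. destruct k as [|k].
           ++ simpl in Hk'. lra.
           ++ assert (G x = 0 \/ F x = 0).
              { apply IH1. exists k. rewrite S_INR in Hk'. lra. } tauto.
      * intros k Hk'. destruct k as [|k].
        -- simpl in Hk'. lra.
        -- rewrite S_INR in Hk'. destruct (IH2 k ltac:(lra)) as [P1 P2].
           rewrite Nat.even_succ, <- Nat.negb_even.
           destruct (Nat.even k); simpl; split; intros; try discriminate; auto.
Qed.

Lemma KEYFG T F G a Lam s : DynH 0 T F G a Lam -> 0 <= T -> (s = 1 \/ s = -1) ->
  0 < s * F 0 -> 0 <= G 0 * a * s ->
  exists e sp, 0 < e <= sp /\ sp = Lam / Rabs a /\ e = s * F 0 / Rabs a /\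
   (forall x, 0 < x <= T -> ((F x = 0 \/ G x = 0) <-> exists k : nat, x = e + INR k * sp)) /\
   (forall k : nat, e + INR (S k) * sp <= T ->
      (G (e + INR k * sp) = 0 <-> F (e + INR (S k) * sp) = 0) /\
      (F (e + INR k * sp) = 0 <-> G (e + INR (S k) * sp) = 0)).
Proof.
  intros HD HT Hs HF HG.
  assert (Ha : a <> 0) by apply HD.
  assert (Haw : 0 < Rabs a) by (apply Rabs_pos_lt; auto).
  assert (HE : forall x, 0 <= x <= T -> Rabs (F x) + Rabs (G x) = Lam) by apply HD.
  assert (HLam : 0 < Lam).
  { rewrite <- (HE 0 ltac:(lra)). assert (F 0 <> 0) by (intro E; rewrite E in HF; lra).
    pose proof (Rabs_pos_lt _ H); pose proof (Rabs_pos (G 0)); lra. }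
  assert (HsF : s * F 0 = Rabs (F 0)) by (apply spm_abs; auto).
  assert (HFL : Rabs (F 0) <= Lam) by (rewrite <- (HE 0 ltac:(lra)); pose proof (Rabs_pos (G 0)); lra).
  set (e := s * F 0 / Rabs a). set (sp := Lam / Rabs a).
  assert (He : 0 < e) by (apply Rdiv_lt_0_compat; auto).
  assert (Hesp : e <= sp).
  { unfold e, sp. unfold Rdiv. apply Rmult_le_compat_r. left; apply Rinv_0_lt_compat; auto. lra. }
  assert (Hsp : 0 < sp) by lra.
  assert (KG : forall x, 0 < x <= T -> ((F x = 0 \/ G x = 0) <-> exists k : nat, x = e + INR k * sp) /\
     (forall k : nat, x = e + INR k * sp -> (Nat.even k = true -> F x = 0) /\ (Nat.even k = false -> G x = 0))).
  { intros x Hx. destruct (nat_arch ((x - e) / sp)) as [n Hn].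
    assert (x < e + INR n * sp).
    { apply Rmult_lt_compat_r with (r := sp) in Hn; auto.
      replace ((x - e) / sp * sp) with (x - e) in Hn by (field; lra). lra. }
    pose proof (ITER 0 T Lam n F G a 0 s HD ltac:(lra) Hs HF HG x Hx) as I.
    replace (0 + s * F 0 / Rabs a) with e in I by (unfold e; ring).
    apply I. auto. }
  exists e, sp. split; [lra|]. split; [reflexivity|]. split; [reflexivity|]. split.
  - intros x Hx. apply KG; auto.
  - intros k Hk.
    assert (Hk0 : 0 < e + INR k * sp <= T).
    { assert (0 <= INR k * sp) by (apply Rmult_le_pos; [apply pos_INR|lra]). rewrite S_INR in Hk. lra. }
    assert (Hk1 : 0 < e + INR (S k) * sp <= T).
    { assert (0 <= INR (S k) * sp) by (apply Rmult_le_pos; [apply pos_INR|lra]). lra. }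
    destruct (KG _ Hk0) as [_ P0]. destruct (KG _ Hk1) as [_ P1].
    specialize (P0 k eq_refl). specialize (P1 (S k) eq_refl).
    assert (NB0 : ~ (F (e + INR k * sp) = 0 /\ G (e + INR k * sp) = 0)).
    { intros [E1 E2]. pose proof (HE (e + INR k * sp) ltac:(lra)). rewrite E1, E2, Rabs_R0 in H. lra. }
    assert (NB1 : ~ (F (e + INR (S k) * sp) = 0 /\ G (e + INR (S k) * sp) = 0)).
    { intros [E1 E2]. pose proof (HE (e + INR (S k) * sp) ltac:(lra)). rewrite E1, E2, Rabs_R0 in H. lra. }
    rewrite Nat.even_succ, <- Nat.negb_even in P1.
    destruct (Nat.even k); simpl in P1; destruct P0 as [P0a P0b]; destruct P1 as [P1a P1b].
    + specialize (P0a eq_refl). specialize (P1b eq_refl). split; split; intros; tauto.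
    + specialize (P0b eq_refl). specialize (P1a eq_refl). split; split; intros; tauto.
Qed.

Lemma interval_not_neg c d : c < d -> negligible (fun t => c <= t <= d) -> False.
Proof.
  intros Hcd Hn.
  assert (c = d).
  { apply (AC_deriv0 c d (fun x => x)); [lra| apply AC_id|].
    apply neg_subset with (S' := fun t => c <= t <= d); auto. intros t [Ht _]; auto. }
  lra.
Qed.

Lemma ae_cont_const T f c : 0 < T -> cont_on 0 T f ->
  negligible (fun t => 0 <= t <= T /\ f t <> c) -> forall x, 0 <= x <= T -> f x = c.
Proof.
  intros HT Hf Hn x Hx. apply NNPP. intro Hne.
  assert (HD : 0 < Rabs (f x - c)) by (apply Rabs_pos_lt; lra).
  destruct (Hf x Hx _ HD) as [d [Hd Hc]].
  set (c1 := Rmax 0 (x - d/2)). set (d1 := Rmin T (x + d/2)).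
  assert (0 <= c1) by apply Rmax_l. assert (x - d/2 <= c1) by apply Rmax_r.
  assert (d1 <= T) by apply Rmin_l. assert (d1 <= x + d/2) by apply Rmin_r.
  assert (c1 <= x) by (apply Rmax_lub; lra). assert (x <= d1) by (apply Rmin_glb; lra).
  assert (c1 < d1).
  { destruct (Req_dec c1 x); destruct (Req_dec x d1); try lra.
    exfalso. unfold c1, d1 in *. revert H5 H6. unfold Rmax, Rmin.
    repeat destruct Rle_dec; intros; lra. }
  apply (interval_not_neg c1 d1); auto.
  apply neg_subset with (S' := fun t => 0 <= t <= T /\ f t <> c); auto.
  intros t Ht. split; [lra|]. intro E.
  specialize (Hc t ltac:(lra)). assert (Rabs (t - x) < d).
  { apply Rabs_def1; lra. }
  specialize (Hc H6). rewrite E in Hc. rewrite Rabs_minus_sym in Hc. lra.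
Qed.

Lemma ext_hyps T lam gam u : extremal_pair T lam gam u -> exists lam0, Hyps T lam gam u lam0.
Proof.
  intros [Hg [Hl [Hb [Hnz [Hh [lam0 [H0 Hae]]]]]]]. exists lam0.
  split; auto. split; auto. unfold good. apply ae_and; auto. apply ae_and; auto.
Qed.

Lemma phi_cont T lam gam u lam0 p : Hyps T lam gam u lam0 ->
  (forall t, 0 <= t <= T -> coord 2 (lam t) = p) ->
  cont_on 0 T (phi1 lam gam) /\ cont_on 0 T (phi2 lam gam).
Proof.
  intros [Hg [Hl Hae]] Hp. split.
  - apply cont_ext with (f := fun y => coord 0 (lam y) + (- p / 2) * coord 1 (gam y) + 0 * y).
    + intros x Hx. rewrite phi1_eq, Hp by auto. field.
    + apply AC_cont, AC_lin; [apply Hl|apply Hg]; lia.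
  - apply cont_ext with (f := fun y => coord 1 (lam y) + (p / 2) * coord 0 (gam y) + 0 * y).
    + intros x Hx. rewrite phi2_eq, Hp by auto. field.
    + apply AC_cont, AC_lin; [apply Hl|apply Hg]; lia.
Qed.

Lemma energy T lam gam u lam0 : Hyps T lam gam u lam0 -> 0 < T ->
  cont_on 0 T (phi1 lam gam) -> cont_on 0 T (phi2 lam gam) ->
  forall x, 0 <= x <= T -> Rabs (phi1 lam gam x) + Rabs (phi2 lam gam x) = lam0.
Proof.
  intros [Hg [Hl Hae]] HT H1 H2.
  apply (ae_cont_const T (fun x => Rabs (phi1 lam gam x) + Rabs (phi2 lam gam x)) lam0 HT).
  - apply cont_plus; apply cont_abs; auto.
  - apply neg_subset with (S' := fun t => 0 <= t <= T /\ ~ good lam gam u lam0 t); auto.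
    intros t [Ht Hn]. split; auto. intros [_ [_ [_ E]]]. auto.
Qed.

Lemma LLA T lam gam u lam0 p : Hyps T lam gam u lam0 ->
  (forall t, 0 <= t <= T -> coord 2 (lam t) = p) ->
  LLrel 0 T (phi2 lam gam) (phi1 lam gam) (- p).
Proof.
  intros HH Hp c d s Hc Hcd HdT Hs Hpos x Hx.
  rewrite (LL1 T lam gam u lam0 p s c d HH Hp Hc Hcd HdT Hs (or_intror Hpos) x Hx). ring.
Qed.

Lemma LLB T lam gam u lam0 p : Hyps T lam gam u lam0 ->
  (forall t, 0 <= t <= T -> coord 2 (lam t) = p) ->
  LLrel 0 T (phi1 lam gam) (phi2 lam gam) p.
Proof.
  intros HH Hp c d s Hc Hcd HdT Hs Hpos x Hx.
  rewrite (LL2 T lam gam u lam0 p s c d HH Hp Hc Hcd HdT Hs (or_intror Hpos) x Hx). ring.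
Qed.

Lemma KEYphi T lam gam u lam0 : Hyps T lam gam u lam0 -> 0 < T ->
  (exists t0, 0 <= t0 <= T /\ phi1 lam gam t0 <> 0 /\ phi2 lam gam t0 <> 0) ->
  exists e sp, 0 < e <= sp /\
   (forall x, 0 < x <= T -> ((phi1 lam gam x = 0 \/ phi2 lam gam x = 0) <->
        exists k : nat, x = e + INR k * sp)) /\
   (forall k : nat, e + INR (S k) * sp <= T ->
      (phi1 lam gam (e + INR k * sp) = 0 <-> phi2 lam gam (e + INR (S k) * sp) = 0)) /\
   ((forall t, 0 <= t <= T -> coord 2 (lam t) = 0) -> T <= e).
Proof.
  intros HH HT [t0 [Ht0 [N1 N2]]].
  set (p := coord 2 (lam 0)).
  assert (Hp : forall t, 0 <= t <= T -> coord 2 (lam t) = p) by (apply (pz_const T lam gam u lam0 HH)).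
  destruct (phi_cont T lam gam u lam0 p HH Hp) as [C1 C2].
  pose proof (energy T lam gam u lam0 HH HT C1 C2) as HE.
  assert (Hl0 : 0 < lam0).
  { rewrite <- (HE t0 Ht0). pose proof (Rabs_pos_lt _ N1). pose proof (Rabs_pos (phi2 lam gam t0)). lra. }
  destruct (Req_dec p 0) as [Hp0|Hp0].
  - assert (K1 : forall x, 0 <= x <= T -> phi1 lam gam x = phi1 lam gam 0).
    { intros x Hx. rewrite (LL1 T lam gam u lam0 p 1 0 T HH Hp ltac:(lra) ltac:(lra) ltac:(lra)
        ltac:(auto) (or_introl Hp0) x Hx). rewrite Hp0. ring. }
    assert (K2 : forall x, 0 <= x <= T -> phi2 lam gam x = phi2 lam gam 0).
    { intros x Hx. rewrite (LL2 T lam gam u lam0 p 1 0 T HH Hp ltac:(lra) ltac:(lra) ltac:(lra)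
        ltac:(auto) (or_introl Hp0) x Hx). rewrite Hp0. ring. }
    exists (2 * T), (2 * T). split; [lra|]. split; [|split].
    + intros x Hx. split.
      * intros [E|E]; exfalso; [rewrite K1 in E by lra; rewrite <- (K1 t0) in E by lra
                                 |rewrite K2 in E by lra; rewrite <- (K2 t0) in E by lra]; auto.
      * intros [k Hk]. exfalso. assert (0 <= INR k * (2 * T)) by (apply Rmult_le_pos; [apply pos_INR|lra]). lra.
    + intros k Hk. exfalso. assert (0 <= INR (S k) * (2 * T)) by (apply Rmult_le_pos; [apply pos_INR|lra]). lra.
    + intros _. lra.
  - assert (DA : DynH 0 T (phi2 lam gam) (phi1 lam gam) (- p) lam0).
    { repeat split; auto. apply (LLA T lam gam u lam0 p HH Hp). rewrite Ropp_involutive.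
      apply (LLB T lam gam u lam0 p HH Hp). lra. intros x Hx. rewrite Rplus_comm. auto. }
    assert (DB : DynH 0 T (phi1 lam gam) (phi2 lam gam) p lam0).
    { repeat split; auto. apply (LLB T lam gam u lam0 p HH Hp). apply (LLA T lam gam u lam0 p HH Hp). }
    assert (Last : (forall t, 0 <= t <= T -> coord 2 (lam t) = 0) -> False).
    { intros H. apply Hp0. unfold p. apply H. lra. }
    assert (FromA : forall s, (s = 1 \/ s = -1) -> 0 < s * phi2 lam gam 0 ->
        0 <= phi1 lam gam 0 * - p * s -> exists e sp, 0 < e <= sp /\
   (forall x, 0 < x <= T -> ((phi1 lam gam x = 0 \/ phi2 lam gam x = 0) <->
        exists k : nat, x = e + INR k * sp)) /\
   (forall k : nat, e + INR (S k) * sp <= T ->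
      (phi1 lam gam (e + INR k * sp) = 0 <-> phi2 lam gam (e + INR (S k) * sp) = 0)) /\
   ((forall t, 0 <= t <= T -> coord 2 (lam t) = 0) -> T <= e)).
    { intros s Hs H1 H2. destruct (KEYFG T _ _ _ _ s DA ltac:(lra) Hs H1 H2) as [e [sp [A [_ [_ [B C]]]]]].
      exists e, sp. split; auto. split; [|split].
      - intros x Hx. rewrite <- (B x Hx). tauto.
      - intros k Hk. apply C; auto.
      - intros H; exfalso; auto. }
    assert (FromB : forall s, (s = 1 \/ s = -1) -> 0 < s * phi1 lam gam 0 ->
        0 <= phi2 lam gam 0 * p * s -> exists e sp, 0 < e <= sp /\
   (forall x, 0 < x <= T -> ((phi1 lam gam x = 0 \/ phi2 lam gam x = 0) <->
        exists k : nat, x = e + INR k * sp)) /\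
   (forall k : nat, e + INR (S k) * sp <= T ->
      (phi1 lam gam (e + INR k * sp) = 0 <-> phi2 lam gam (e + INR (S k) * sp) = 0)) /\
   ((forall t, 0 <= t <= T -> coord 2 (lam t) = 0) -> T <= e)).
    { intros s Hs H1 H2. destruct (KEYFG T _ _ _ _ s DB ltac:(lra) Hs H1 H2) as [e [sp [A [_ [_ [B C]]]]]].
      exists e, sp. split; auto. split; [|split].
      - intros x Hx. apply B; auto.
      - intros k Hk. apply C; auto.
      - intros H; exfalso; auto. }
    assert (HE0 := HE 0 ltac:(lra)).
    destruct (Req_dec (phi1 lam gam 0) 0) as [Z1|Z1].
    + assert (phi2 lam gam 0 <> 0).
      { intro E. rewrite Z1, E, Rabs_R0 in HE0. lra. }
      apply (FromA (sgnv (phi2 lam gam 0))); [apply sgnv_pm|apply sgnv_pos; auto|].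
      rewrite Z1. lra.
    + destruct (Rle_dec 0 (phi2 lam gam 0 * p * sgnv (phi1 lam gam 0))) as [Q|Q].
      * apply (FromB (sgnv (phi1 lam gam 0))); [apply sgnv_pm|apply sgnv_pos; auto|auto].
      * assert (Z2 : phi2 lam gam 0 <> 0).
        { intro E. apply Q. rewrite E. lra. }
        apply (FromA (sgnv (phi2 lam gam 0))); [apply sgnv_pm|apply sgnv_pos; auto|].
        pose proof (sgnv_pos _ Z1). pose proof (sgnv_pos _ Z2).
        assert (0 < p * p) by (apply Rsqr_pos_lt in Hp0; unfold Rsqr in Hp0; lra).
        assert (Eq : (phi2 lam gam 0 * p * sgnv (phi1 lam gam 0)) * (phi1 lam gam 0 * - p * sgnv (phi2 lam gam 0))
           = - ((sgnv (phi1 lam gam 0) * phi1 lam gam 0) * (sgnv (phi2 lam gam 0) * phi2 lam gam 0) * (p * p))) by ring.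
        assert (0 < (sgnv (phi1 lam gam 0) * phi1 lam gam 0) * (sgnv (phi2 lam gam 0) * phi2 lam gam 0) * (p * p)).
        { apply Rmult_lt_0_compat; auto. apply Rmult_lt_0_compat; auto. }
        nra.
Qed.

Lemma least_nat (P : nat -> Prop) : forall m, P m -> exists n, P n /\ forall k, (k < n)%nat -> ~ P k.
Proof.
  intro m. pattern m. apply lt_wf_ind. clear m. intros m IH Hm.
  destruct (classic (exists k, (k < m)%nat /\ P k)) as [[k [Hk Pk]]|Hn].
  - apply (IH k Hk Pk).
  - exists m. split; auto. intros k Hk Pk. apply Hn. exists k; auto.
Qed.

Lemma sgnv_eq a b : 0 < a * b -> sgnv a = sgnv b.
Proof. unfold sgnv; destruct (Rlt_dec 0 a), (Rlt_dec 0 b); intros; auto; exfalso; nra. Qed.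

Lemma sgnv_neq a b : a * b < 0 -> sgnv a <> sgnv b.
Proof. unfold sgnv; destruct (Rlt_dec 0 a), (Rlt_dec 0 b); intros; try lra; nra. Qed.

Lemma junction T f g q a0 J b0 s1 s2 : 0 <= a0 -> a0 < J -> J < b0 -> b0 <= T ->
  cont_on 0 T f -> cont_on 0 T g -> LLrel 0 T g f q ->
  (forall x, a0 < x < J -> f x <> 0) -> (forall x, J < x < b0 -> f x <> 0) ->
  (forall x, a0 < x < J -> sgnv (f x) = s1) -> (forall x, J < x < b0 -> sgnv (f x) = s2) ->
  ~ (f J = 0 /\ g J = 0) -> (s1 <> s2 <-> f J = 0).
Proof.
  intros Ha0 HaJ HJb HbT Cf Cg LL Nf1 Nf2 S1 S2 NB. split.
  - intros Hne. apply NNPP. intro HfJ. apply Hne.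
    assert (Nz : forall z, a0 < z < b0 -> f z <> 0).
    { intros z Hz. destruct (Rtotal_order z J) as [H|[H|H]].
      apply Nf1; lra. subst; auto. apply Nf2; lra. }
    pose proof (sign_const 0 T f a0 b0 Cf Ha0 HbT Nz ((a0 + J)/2) ((J + b0)/2) ltac:(lra) ltac:(lra)).
    rewrite <- (S1 ((a0 + J)/2)) by lra. rewrite <- (S2 ((J + b0)/2)) by lra.
    apply sgnv_eq; auto.
  - intros HfJ.
    assert (HgJ : g J <> 0) by (intro E; apply NB; auto).
    set (sg := sgnv (g J)).
    assert (Hsg : sg = 1 \/ sg = -1) by apply sgnv_pm.
    assert (Hsg0 : 0 < sg * g J) by apply sgnv_pos, HgJ.
    destruct (Cg J ltac:(lra) (sg * g J) Hsg0) as [del [Hdel Hc]].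
    set (h := Rmin (Rmin del (J - a0)) (b0 - J) / 2).
    assert (Hh1 : Rmin (Rmin del (J - a0)) (b0 - J) <= Rmin del (J - a0)) by apply Rmin_l.
    assert (Hh2 : Rmin (Rmin del (J - a0)) (b0 - J) <= b0 - J) by apply Rmin_r.
    assert (Hh3 : Rmin del (J - a0) <= del) by apply Rmin_l.
    assert (Hh4 : Rmin del (J - a0) <= J - a0) by apply Rmin_r.
    assert (Hh0 : 0 < Rmin (Rmin del (J - a0)) (b0 - J)) by (repeat apply Rmin_glb_lt; lra).
    assert (Hpos : forall x, J - h < x < J + h -> 0 < sg * g x).
    { intros x Hx. unfold h in Hx.
      specialize (Hc x ltac:(lra) ltac:(apply Rabs_def1; lra)).
      assert (H0 : Rabs (sg * (g x - g J)) = Rabs (g x - g J)).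
      { rewrite Rabs_mult. destruct Hsg as [E|E]; rewrite E; [rewrite Rabs_R1|rewrite Rabs_m1]; ring. }
      assert (H1 := Rle_abs (- (sg * (g x - g J)))). rewrite Rabs_Ropp in H1. lra. }
    assert (Lf := LL (J - h) (J + h) sg ltac:(unfold h; lra) ltac:(unfold h; lra)
      ltac:(unfold h; lra) Hsg Hpos).
    pose proof (Lf J ltac:(unfold h; lra)) as EJ.
    pose proof (Lf (J + h) ltac:(unfold h; lra)) as EJh.
    assert (Efy : f (J + h) = - f (J - h)).
    { rewrite EJh. rewrite HfJ in EJ.
      replace (J + h - (J - h)) with (2 * (J - (J - h))) by ring. lra. }
    assert (Hy1 : f (J - h) <> 0) by (apply Nf1; unfold h; lra).
    rewrite <- (S1 (J - h)) by (unfold h; lra). rewrite <- (S2 (J + h)) by (unfold h; lra).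
    apply sgnv_neq. rewrite Efy.
    apply Rsqr_pos_lt in Hy1. unfold Rsqr in Hy1. lra.
Qed.

Theorem mainTheorem4 (T : R) (lam gam : R -> R3) (u : R -> R * R) :
  extremal_pair T lam gam u ->
  (exists a b, 0 <= a < b /\ b <= T /\ regular_on lam gam a b) ->
  exists (N : nat) (ts : nat -> R) (c : nat -> R * R),
    (0 < N)%nat /\ ts 0%nat = 0 /\ ts N = T /\
    (forall i, (i < N)%nat -> ts i < ts (S i)) /\
    (forall i, (i < N)%nat ->
       maximal_regular_arc T lam gam (ts i) (ts (S i)) /\
       (fst (c i) = 1 \/ fst (c i) = -1) /\
       (snd (c i) = 1 \/ snd (c i) = -1) /\
       negligible (fun t => ts i < t < ts (S i) /\ u t <> c i)) /\
    (exists s, 0 < s /\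
       (forall i, (0 < i)%nat -> (S i < N)%nat -> ts (S i) - ts i = s) /\
       ts 1%nat - ts 0%nat <= s /\ ts N - ts (pred N) <= s) /\
    ((forall t, 0 <= t <= T -> coord 2 (lam t) = 0) -> N = 1%nat) /\
    (forall i, (0 < i)%nat -> (i < N)%nat ->
       (fst (c (pred i)) <> fst (c i) <-> snd (c (pred i)) = snd (c i))) /\
    (forall i, (0 < i)%nat -> (S i < N)%nat ->
       (fst (c (pred i)) <> fst (c i) <-> fst (c i) = fst (c (S i)))).
Proof.
  intros Hext [a [b [Hab [HbT Hreg]]]].
  assert (HT : 0 < T) by lra.
  destruct (ext_hyps T lam gam u Hext) as [lam0 HH].
  assert (Ht0 : exists t0, 0 <= t0 <= T /\ phi1 lam gam t0 <> 0 /\ phi2 lam gam t0 <> 0).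
  { exists ((a + b) / 2). split; [lra|]. apply Hreg. lra. }
  destruct (KEYphi T lam gam u lam0 HH HT Ht0) as [e [sp [Hesp [Z1 [Z2 Hlast]]]]].
  set (p := coord 2 (lam 0)).
  assert (Hp : forall t, 0 <= t <= T -> coord 2 (lam t) = p) by (apply (pz_const T lam gam u lam0 HH)).
  destruct (phi_cont T lam gam u lam0 p HH Hp) as [C1 C2].
  pose proof (energy T lam gam u lam0 HH HT C1 C2) as HE.
  destruct Ht0 as [t0 [Ht0 [N1 N2]]].
  assert (Hl0 : 0 < lam0).
  { rewrite <- (HE t0 Ht0). pose proof (Rabs_pos_lt _ N1). pose proof (Rabs_pos (phi2 lam gam t0)). lra. }
  assert (NB : forall x, 0 <= x <= T -> ~ (phi1 lam gam x = 0 /\ phi2 lam gam x = 0)).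
  { intros x Hx [E1 E2]. pose proof (HE x Hx). rewrite E1, E2, Rabs_R0 in H. lra. }
  assert (NB' : forall x, 0 <= x <= T -> ~ (phi2 lam gam x = 0 /\ phi1 lam gam x = 0)).
  { intros x Hx [E1 E2]. apply (NB x Hx); auto. }
  assert (Hsp : 0 < sp) by lra.
  assert (Hkp : forall k : nat, 0 <= INR k * sp) by (intros k; apply Rmult_le_pos; [apply pos_INR|lra]).
  destruct (nat_arch ((T - e) / sp)) as [m Hm].
  assert (Pm : T <= e + INR m * sp).
  { apply Rmult_lt_compat_r with (r := sp) in Hm; auto.
    replace ((T - e) / sp * sp) with (T - e) in Hm by (field; lra). lra. }
  destruct (least_nat (fun n => T <= e + INR n * sp) m Pm) as [n0 [H0 H1]].
  assert (H1' : forall k, (k < n0)%nat -> e + INR k * sp < T).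
  { intros k Hk. specialize (H1 k Hk). lra. }
  clear H1.
  set (N := S n0).
  set (ts := fun i => match i with 0%nat => 0 | S j => if Nat.ltb (S j) N then e + INR j * sp else T end).
  assert (Ets : forall j, (j < n0)%nat -> ts (S j) = e + INR j * sp).
  { intros j Hj. unfold ts. replace (Nat.ltb (S j) N) with true; auto.
    symmetry. apply Nat.ltb_lt. unfold N. lia. }
  assert (EtsN : ts N = T).
  { unfold ts, N. replace (Nat.ltb (S n0) (S n0)) with false; auto.
    symmetry. apply Nat.ltb_ge. lia. }
  assert (Ets0 : ts 0%nat = 0) by reflexivity.
  assert (Ets1 : ts 1%nat <= e /\ 0 < ts 1%nat).
  { destruct (Nat.eq_dec n0 0) as [E|E].
    - assert (ts 1%nat = T) by (rewrite <- EtsN; unfold N; rewrite E; reflexivity).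
      rewrite E in H0. simpl in H0. lra.
    - rewrite (Ets 0%nat) by lia. simpl. lra. }
  assert (A1 : forall i, (i < N)%nat -> 0 <= ts i /\ ts i < ts (S i) /\ ts (S i) <= T).
  { intros i Hi. destruct i as [|j].
    - rewrite Ets0. destruct (Nat.eq_dec n0 0) as [E|E].
      + assert (ts 1%nat = T) by (rewrite <- EtsN; unfold N; rewrite E; reflexivity). lra.
      + rewrite (Ets 0%nat) by lia. specialize (H1' 0%nat ltac:(lia)). simpl in *. lra.
    - unfold N in Hi. rewrite (Ets j) by lia. specialize (Hkp j).
      destruct (Nat.eq_dec (S j) n0) as [E|E].
      + assert (ts (S (S j)) = T) by (rewrite <- EtsN; unfold N; rewrite E; reflexivity).
        specialize (H1' j ltac:(lia)). lra.
      + rewrite (Ets (S j)) by lia. rewrite S_INR. specialize (H1' (S j) ltac:(lia)).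
        rewrite S_INR in H1'. lra. }
  assert (Arc : forall i x, (i < N)%nat -> ts i < x < ts (S i) -> forall k : nat, x <> e + INR k * sp).
  { intros i x Hi Hx k Hk. destruct i as [|j].
    - rewrite Ets0 in Hx. specialize (Hkp k). destruct Ets1. lra.
    - unfold N in Hi. rewrite (Ets j) in Hx by lia.
      assert (Hup : ts (S (S j)) <= e + INR (S j) * sp).
      { destruct (Nat.eq_dec (S j) n0) as [E|E].
        + assert (ts (S (S j)) = T) by (rewrite <- EtsN; unfold N; rewrite E; reflexivity).
          rewrite H, E. lra.
        + rewrite (Ets (S j)) by lia. lra. }
      rewrite S_INR in Hup.
      assert (Q1 : INR j < INR k).
      { apply Rmult_lt_reg_r with sp; auto. lra. }
      assert (Q2 : INR k < INR j + 1).
      { apply Rmult_lt_reg_r with sp; auto. lra. }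
      rewrite <- S_INR in Q2. apply INR_lt in Q1. apply INR_lt in Q2. lia. }
  assert (A2 : forall i x, (i < N)%nat -> ts i < x < ts (S i) ->
             phi1 lam gam x <> 0 /\ phi2 lam gam x <> 0).
  { intros i x Hi Hx. destruct (A1 i Hi) as [B1 [B2 B3]].
    destruct (classic (phi1 lam gam x = 0 \/ phi2 lam gam x = 0)) as [Z|Z].
    - exfalso. destruct (proj1 (Z1 x ltac:(lra)) Z) as [k Hk]. apply (Arc i x Hi Hx k Hk).
    - split; intro; apply Z; auto. }
  assert (A3 : forall j, (S j < N)%nat -> phi1 lam gam (ts (S j)) = 0 \/ phi2 lam gam (ts (S j)) = 0).
  { intros j Hj. destruct (A1 (S j) Hj) as [B1 [B2 B3]]. destruct (A1 j ltac:(lia)) as [B4 [B5 B6]].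
    apply Z1; [lra|]. exists j. apply Ets. unfold N in Hj. lia. }
  set (mid := fun i => (ts i + ts (S i)) / 2).
  set (c := fun i => (sgnv (phi1 lam gam (mid i)), sgnv (phi2 lam gam (mid i)))).
  assert (A4 : forall i x, (i < N)%nat -> ts i < x < ts (S i) ->
     sgnv (phi1 lam gam x) = fst (c i) /\ sgnv (phi2 lam gam x) = snd (c i)).
  { intros i x Hi Hx. destruct (A1 i Hi) as [B1 [B2 B3]]. simpl. unfold mid.
    split; apply sgnv_eq.
    - apply (sign_const 0 T (phi1 lam gam) (ts i) (ts (S i)) C1 B1 B3); try lra.
      intros z Hz; apply (A2 i z Hi Hz).
    - apply (sign_const 0 T (phi2 lam gam) (ts i) (ts (S i)) C2 B1 B3); try lra.
      intros z Hz; apply (A2 i z Hi Hz). }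
  assert (A5 : forall j, (S j < N)%nat ->
     (fst (c j) <> fst (c (S j)) <-> phi1 lam gam (ts (S j)) = 0) /\
     (snd (c j) <> snd (c (S j)) <-> phi2 lam gam (ts (S j)) = 0)).
  { intros j Hj. destruct (A1 (S j) Hj) as [B1 [B2 B3]]. destruct (A1 j ltac:(lia)) as [B4 [B5 B6]].
    assert (NBj := NB (ts (S j)) ltac:(lra)). assert (NBj' := NB' (ts (S j)) ltac:(lra)).
    split.
    - apply (junction T (phi1 lam gam) (phi2 lam gam) (- p) (ts j) (ts (S j)) (ts (S (S j)))); auto; try lra.
      + apply (LLA T lam gam u lam0 p HH Hp).
      + intros x Hx. apply (proj1 (A2 j x ltac:(lia) Hx)).
      + intros x Hx. apply (proj1 (A2 (S j) x Hj Hx)).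
      + intros x Hx. apply (proj1 (A4 j x ltac:(lia) Hx)).
      + intros x Hx. apply (proj1 (A4 (S j) x Hj Hx)).
    - apply (junction T (phi2 lam gam) (phi1 lam gam) p (ts j) (ts (S j)) (ts (S (S j)))); auto; try lra.
      + apply (LLB T lam gam u lam0 p HH Hp).
      + intros x Hx. apply (proj2 (A2 j x ltac:(lia) Hx)).
      + intros x Hx. apply (proj2 (A2 (S j) x Hj Hx)).
      + intros x Hx. apply (proj2 (A4 j x ltac:(lia) Hx)).
      + intros x Hx. apply (proj2 (A4 (S j) x Hj Hx)). }
  exists N, ts, c. split; [unfold N; lia|]. split; [auto|]. split; [auto|].
  split; [intros i Hi; apply A1; auto|].
  split; [|split; [|split; [|split]]].
  - intros i Hi. destruct (A1 i Hi) as [B1 [B2 B3]].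
    split; [|split; [apply sgnv_pm|split; [apply sgnv_pm|]]].
    + unfold maximal_regular_arc. split; [lra| split; [lra| split; [lra| split]]].
      * intros x Hx. apply (A2 i x Hi Hx).
      * intros a' b' Ha' Hb' Hr'. split.
        -- destruct i as [|j]. rewrite Ets0 in *; lra.
           apply NNPP; intro Hne.
           destruct (Hr' (ts (S j)) ltac:(lra)) as [Q1 Q2]. destruct (A3 j Hi); contradiction.
        -- destruct (Nat.lt_ge_cases (S i) N) as [Hl|Hg].
           ++ apply NNPP; intro Hne. destruct (A1 (S i) Hl) as [B4 [B5 B6]].
              destruct (Hr' (ts (S i)) ltac:(lra)) as [Q1 Q2]. destruct (A3 i Hl); contradiction.
           ++ assert (S i = N) by (unfold N in *; lia). rewrite H, EtsN in *. lra.
    + apply neg_subset with (S' := fun t => 0 <= t <= T /\ ~ good lam gam u lam0 t);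
        [|apply (proj2 (proj2 HH))].
      intros t [Ht Hut]. split; [lra|]. intro Hg. apply Hut.
      destruct (good_u _ _ _ _ _ Hg) as [U1 [U2 _]].
      destruct (A2 i t Hi Ht) as [Q1 Q2]. destruct (A4 i t Hi Ht) as [S1 S2].
      assert (E1 : fst (u t) = fst (c i)).
      { rewrite <- S1. apply (u_sigma _ _ _ U1 (sgnv_pm _) (sgnv_pos _ Q1)). }
      assert (E2 : snd (u t) = snd (c i)).
      { rewrite <- S2. apply (u_sigma _ _ _ U2 (sgnv_pm _) (sgnv_pos _ Q2)). }
      destruct (u t), (c i); simpl in *; subst; reflexivity.
  - exists sp. split; auto. split; [|split].
    + intros i Hi HSi. destruct i as [|j]; [lia|]. unfold N in HSi.
      rewrite (Ets (S j)), (Ets j) by lia. rewrite S_INR. ring.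
    + rewrite Ets0. destruct Ets1. lra.
    + change (pred N) with n0. rewrite EtsN.
      destruct (Nat.eq_dec n0 0) as [E|E].
      * rewrite E in *. rewrite Ets0. simpl in H0. lra.
      * replace n0 with (S (pred n0)) in * by lia. rewrite (Ets (pred n0)) by lia.
        rewrite S_INR in H0. lra.
  - intros Hz. specialize (Hlast Hz). unfold N. destruct (Nat.eq_dec n0 0); [lia|]. exfalso.
    specialize (H1' 0%nat ltac:(lia)). simpl in H1'. lra.
  - intros i Hi HiN. destruct i as [|j]; [lia|]. simpl pred.
    destruct (A1 (S j) HiN) as [B1 [B2 B3]].
    assert (NBj := NB (ts (S j)) ltac:(lra)).
    destruct (A5 j HiN) as [[F1 F2] [G1 G2]]. destruct (A3 j HiN) as [Z|Z].
    + split.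
      * intros _. apply NNPP; intro Hne. apply G1 in Hne. apply NBj; auto.
      * intros _. apply F2; auto.
    + split.
      * intros H. exfalso. apply F1 in H. apply NBj; auto.
      * intros H. exfalso. apply (G2 Z); auto.
  - intros i Hi HSi. destruct i as [|j]; [lia|]. simpl pred.
    assert (HSj : (S j < N)%nat) by lia.
    destruct (A1 (S j) HSj) as [B1 [B2 B3]].
    destruct (A5 j HSj) as [[F1 F2] _]. destruct (A5 (S j) HSi) as [[F1' F2'] _].
    assert (NB2 := NB (ts (S (S j))) ltac:(lra)).
    assert (A3' := A3 (S j) HSi).
    assert (Z2' := Z2 j). unfold N in HSi.
    rewrite <- (Ets j), <- (Ets (S j)) in Z2' by lia.
    specialize (Z2' B3).
    split.
    + intro H. apply F1 in H. apply Z2' in H. apply NNPP; intro Hne. apply F1' in Hne. apply NB2; auto.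
    + intro Heq. apply F2. apply Z2'. destruct A3' as [Q|Q]; auto.
      exfalso. apply F2' in Q. auto.
Qed.
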